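(* Let $M=U(2)\oplus D_4\oplus D_4$, identified with $H^2(X,\mathbb Z)^+$, and let $K=U\oplus A_1^{\oplus8}\subset M$ be the index-2 sublattice generated by the fibre class $F$, the class $S_0$ and $F_1,\dots,F_8$. Then $O(q_M)\cong O(q_N)\cong S_8$, and every permutation of the eight classes $F_1,\dots,F_8$ (fixing $F$ and $S_0$) extends to an isometry of $M$; the group of isometries of $M$ so obtained is naturally isomorphic, via the natural map $O(M)\to O(q_M)$, to $O(q_M)$.
   Context: Lattice conventions: $U$ has Gram matrix $\begin{pmatrix}0&1\\1&0\end{pmatrix}$; $A_1,D_4$ are negative definite root lattices; $L(2)$ means the form multiplied by $2$. Setup: $X$ is the K3 surface (minimal resolution of the double cover of $\mathbb P^1\times\mathbb P^1$ branched along $C+L_0+L_1$, where $C:y_0^2\prod_{i=1}^4(x_0-\lambda_ix_1)+y_1^2\prod_{i=5}^8(x_0-\lambda_ix_1)=0$ for distinct $\lambda_i$, $L_j=\{y_j=0\}$) with the automorphism $\sigma$ of order 4 lifting $(x_0:x_1,y_0:y_1)\mapsto(x_0:x_1,y_0:-y_1)$, the elliptic fibration $\pi$ induced by projection to $(x_0:x_1)$ with fibre class $F$, singular fibres $E_i+F_i$ of type III and sections $S_0,S_1$ with $E_i\cdot S_0=F_i\cdot S_1=1$; $H^2(X,\mathbb Z)^+=\{x:(\sigma^2)^*x=x\}\cong M$, and $H^2(X,\mathbb Z)^+$ is generated by $K$ and $(F_1+\dots+F_8)/2$. $N=U\oplus U(2)\oplus D_4\oplus D_4$. For an even lattice $T$,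 $A_T=T^*/T$ and $q_T:A_T\to\mathbb Q/2\mathbb Z$, $q_T(x)=\langle x,x\rangle\bmod 2\mathbb Z$ is the discriminant quadratic form; $O(q_T)$ is its isometry group. *)

(* Defs.v *)
From HB Require Import structures.
From mathcomp Require Import all_boot all_order all_algebra all_fingroup.
Set Implicit Arguments. Unset Strict Implicit. Unset Printing Implicit Defensive.
Import Order.TTheory GRing.Theory Num.Theory.
Local Open Scope ring_scope.

Definition is_int (q : rat) : Prop := exists z : int, q = z%:~R.

Definition bform n (B : 'M[rat]_n) (x y : 'rV[rat]_n) : rat := (x *m B *m y^T) 0 0.

Definition zspan k n (P : 'M[rat]_(k, n)) (x : 'rV[rat]_n) : Prop :=
  exists c : 'I_k -> int, x = \sum_i (c i)%:~R *: row i P.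

Definition dual n (B : 'M[rat]_n) (L : 'rV[rat]_n -> Prop) (x : 'rV[rat]_n) : Prop :=
  forall y, L y -> is_int (bform B x y).

Definition eq_mod2 (a b : rat) : Prop := is_int ((a - b) / 2).

(* A_L = L^*/L is modelled by L^* up to the equivalence x ~ y <-> x - y \in L. *)
Definition disc_isometry n (B : 'M[rat]_n) (L : 'rV[rat]_n -> Prop)
    (f : 'rV[rat]_n -> 'rV[rat]_n) : Prop :=
  (forall x, dual B L x -> dual B L (f x)) /\
  (forall x y, dual B L x -> dual B L y -> L (x - y) -> L (f x - f y)) /\
  (forall x y, dual B L x -> dual B L y -> L (f (x + y) - (f x + f y))) /\
  (forall x y, dual B L x -> dual B L y -> L (f x - f y) -> L (x - y)) /\
  (forall y, dual B L y -> exists2 x, dual B L x & L (f x - y)) /\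
  (forall x, dual B L x -> eq_mod2 (bform B (f x) (f x)) (bform B x x)).

Definition disc_equiv n (B : 'M[rat]_n) (L : 'rV[rat]_n -> Prop)
    (f g : 'rV[rat]_n -> 'rV[rat]_n) : Prop :=
  forall x, dual B L x -> L (f x - g x).

(* Phi : S_8 -> O(q_L) is a group isomorphism.  MathComp composes
   permutations as (s * t) i = t (s i); we use the same ("first s, then t")
   convention for the group law of O(q_L). *)
Definition iso_S8_Oq n (B : 'M[rat]_n) (L : 'rV[rat]_n -> Prop)
    (Phi : 'S_8 -> 'rV[rat]_n -> 'rV[rat]_n) : Prop :=
  (forall s, disc_isometry B L (Phi s)) /\
  (forall s t, disc_equiv B L (Phi (s * t)%g) (Phi t \o Phi s)) /\
  (forall s t, disc_equiv B L (Phi s) (Phi t) -> s = t) /\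
  (forall f, disc_isometry B L f -> exists s, disc_equiv B L f (Phi s)).

Definition Oq_isom_S8 n (B : 'M[rat]_n) (L : 'rV[rat]_n -> Prop) : Prop :=
  exists Phi, iso_S8_Oq B L Phi.

(* negative definite D4 (central node 1) *)
Definition d4 (a b : nat) : rat :=
  if a == b then -2 else if ((a == 1%N) || (b == 1%N)) then 1 else 0.

(* Gram matrix on Q^10 in the basis (F, S_0, F_1, ..., F_8):
   F^2 = 0, F.S_0 = 1, S_0^2 = -2, F_i^2 = -2, all other products 0. *)
Definition BK : 'M[rat]_10 :=
  \matrix_(i, j)
    if i == j then (if (val i == 0)%N then 0 else -2)
    else if ((val i == 0) && (val j == 1)) || ((val i == 1) && (val j == 0))
    then 1 else 0.

(* generators of M = K + Z (F_1 + ... + F_8)/2 : the 10 basis vectors of K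
   and the vector (F_1+...+F_8)/2 *)
Definition PM : 'M[rat]_(11, 10) :=
  \matrix_(i, j)
    if (val i < 10)%N then ((val i == val j)%:R)
    else if (2 <= val j)%N then 1/2 else 0.

Definition Mlat (x : 'rV[rat]_10) : Prop := zspan PM x.

Definition BM0 : 'M[rat]_10 :=
  \matrix_(i, j)
    let a := val i in let b := val j in
    if (a < 2)%N && (b < 2)%N then (if a == b then 0 else 2)
    else if (2 <= a < 6)%N && (2 <= b < 6)%N then d4 (a - 2) (b - 2)
    else if (6 <= a)%N && (6 <= b)%N then d4 (a - 6) (b - 6)
    else 0.

(* N = U + U(2) + D4 + D4 = Z^12 with this Gram matrix *)
Definition BN : 'M[rat]_12 :=
  \matrix_(i, j)
    let a := val i in let b := val j in
    if (a < 2)%N && (b < 2)%N then (if a == b then 0 else 1)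
    else if (2 <= a < 4)%N && (2 <= b < 4)%N then (if a == b then 0 else 2)
    else if (4 <= a < 8)%N && (4 <= b < 8)%N then d4 (a - 4) (b - 4)
    else if (8 <= a)%N && (8 <= b)%N then d4 (a - 8) (b - 8)
    else 0.

Definition Nlat (x : 'rV[rat]_12) : Prop := zspan (1%:M : 'M[rat]_12) x.

(* the linear map of Q^10 fixing F, S_0 and sending F_(i+1) to F_(s i + 1) *)
Definition permF (s : 'S_8) (k : 'I_10) : 'I_10 :=
  if (val k < 2)%N then k else inord (s (inord (val k - 2)) + 2).

Definition gperm (s : 'S_8) : 'M[rat]_10 :=
  \matrix_(k, l) ((permF s k == l)%:R).

(* Main.v *)
Require Import Defs.
From HB Require Import structures.
From mathcomp Require Import all_boot all_order all_algebra all_fingroup.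
From mathcomp Require Import ring zify.
Import GRing.Theory Num.Theory.
Local Open Scope ring_scope.
Set Implicit Arguments. Unset Strict Implicit. Unset Printing Implicit Defensive.

Lemma is_intE (q : rat) : is_int q <-> q \is a Num.int.
Proof. by split => [[z ->]|/intrP [z ->]]; [exact: intr_int| exists z]. Qed.

Lemma is_int_int (z : int) : is_int z%:~R. Proof. by exists z. Qed.
Lemma is_int_nat (n : nat) : is_int n%:R. Proof. by exists n. Qed.
Lemma is_intD a b : is_int a -> is_int b -> is_int (a + b).
Proof. by move=> /is_intE ? /is_intE ?; apply/is_intE; apply: rpredD. Qed.
Lemma is_intN a : is_int a -> is_int (- a).
Proof. by move=> /is_intE ?; apply/is_intE; rewrite rpredN. Qed.
Lemma is_intB a b : is_int a -> is_int b -> is_int (a - b).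
Proof. by move=> /is_intE ? /is_intE ?; apply/is_intE; apply: rpredB. Qed.
Lemma is_intM a b : is_int a -> is_int b -> is_int (a * b).
Proof. by move=> /is_intE ? /is_intE ?; apply/is_intE; apply: rpredM. Qed.
Lemma is_int0 : is_int 0. Proof. by exists 0. Qed.
Lemma is_int1 : is_int 1. Proof. by exists 1. Qed.
Lemma is_int_sum (I : finType) (F : I -> rat) :
  (forall i, is_int (F i)) -> is_int (\sum_i F i).
Proof.
move=> H; apply/is_intE; apply: rpred_sum => i _; exact/is_intE.
Qed.
Lemma is_int_dec q : {is_int q} + {~ is_int q}.
Proof.
case E: (q \is a Num.int); [left; exact/is_intE| right => /is_intE; by rewrite E].
Qed.

Lemma eqm2_refl a : eq_mod2 a a.
Proof. by rewrite /eq_mod2 subrr mul0r; exact: is_int0. Qed.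
Lemma eqm2_sym a b : eq_mod2 a b -> eq_mod2 b a.
Proof. rewrite /eq_mod2 => /is_intN; by rewrite -mulNr opprB. Qed.
Lemma eqm2_trans a b c : eq_mod2 a b -> eq_mod2 b c -> eq_mod2 a c.
Proof.
rewrite /eq_mod2 => H1 H2; have := is_intD H1 H2.
by rewrite -mulrDl addrA subrK.
Qed.
Lemma eqm2_add2 a z : is_int z -> eq_mod2 (a + 2 * z) a.
Proof.
move=> Hz; rewrite /eq_mod2 addrC addKr mulrC mulrA mulVf ?mul1r //.
Qed.
Definition mk m n (f : nat -> nat -> rat) : 'M[rat]_(m, n) :=
  \matrix_(i < m, j < n) f i j.
Definition lsum (n : nat) (F : nat -> rat) : rat :=
  foldr (fun k acc => F k + acc) 0 (iota 0 n).

Lemma mkE m n f (i : 'I_m) (j : 'I_n) : mk m n f i j = f i j.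
Proof. by rewrite mxE. Qed.

Lemma lsumS n F : lsum n.+1 F = lsum n F + F n.
Proof.
rewrite /lsum -addn1 iotaD foldr_cat /= addr0.
elim: (iota 0 n) => [|a l IH] /=; first by rewrite add0r.
by rewrite IH addrA.
Qed.

Lemma lsumE n (F : nat -> rat) : \sum_(k < n) F k = lsum n F.
Proof.
elim: n => [|n IH]; first by rewrite big_ord0.
by rewrite big_ord_recr /= IH lsumS.
Qed.

Lemma mulmk m n p f g :
  mk m n f *m mk n p g = mk m p (fun i j => lsum n (fun k => f i k * g k j)).
Proof.
apply/matrixP => i j; rewrite !mxE -lsumE.
by apply: eq_bigr => k _; rewrite !mxE.
Qed.

Lemma trmk m n f : (mk m n f)^T = mk n m (fun i j => f j i).
Proof. by apply/matrixP => i j; rewrite !mxE. Qed.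

Definition chk2 m n (P : nat -> nat -> bool) :=
  all (fun i => all (fun j => P i j) (iota 0 n)) (iota 0 m).

Lemma chk2P m n P : chk2 m n P -> forall i j, (i < m)%N -> (j < n)%N -> P i j.
Proof.
move=> /allP H i j Hi Hj.
have /allP H2 : all (fun j => P i j) (iota 0 n) by apply: H; rewrite mem_iota add0n.
by apply: H2; rewrite mem_iota add0n.
Qed.

Lemma mk_eq m n f g : chk2 m n (fun i j => f i j == g i j) -> mk m n f = mk m n g.
Proof.
move=> H; apply/matrixP => i j; rewrite !mxE; apply/eqP.
exact: (chk2P H (ltn_ord i) (ltn_ord j)).
Qed.

Definition tomk m n (A : 'M[rat]_(m.+1, n.+1)) : nat -> nat -> rat :=
  fun i j => A (inord i) (inord j).

Lemma tomkE m n (A : 'M[rat]_(m.+1, n.+1)) : A = mk m.+1 n.+1 (tomk A).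
Proof.
apply/matrixP => i j; rewrite !mxE /tomk.
by congr (A _ _); apply/val_inj; rewrite /= inordK.
Qed.
Definition bk (a b : nat) : rat :=
  if a == b then (if a == 0%N then 0 else -2)
  else if ((a == 0%N) && (b == 1%N)) || ((a == 1%N) && (b == 0%N)) then 1 else 0.
Lemma BKmk : BK = mk 10 10 bk.
Proof. by apply/matrixP => i j; rewrite !mxE. Qed.

Definition pm (a b : nat) : rat :=
  if (a < 10)%N then ((a == b)%:R) else if (2 <= b)%N then 1/2 else 0.
Lemma PMmk : PM = mk 11 10 pm.
Proof. by apply/matrixP => i j; rewrite !mxE. Qed.

Definition bm0 (a b : nat) : rat :=
    if (a < 2)%N && (b < 2)%N then (if a == b then 0 else 2)
    else if (2 <= a < 6)%N && (2 <= b < 6)%N then d4 (a - 2) (b - 2)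
    else if (6 <= a)%N && (6 <= b)%N then d4 (a - 6) (b - 6)
    else 0.
Lemma BM0mk : BM0 = mk 10 10 bm0.
Proof. by apply/matrixP => i j; rewrite !mxE. Qed.

Definition bn (a b : nat) : rat :=
    if (a < 2)%N && (b < 2)%N then (if a == b then 0 else 1)
    else if (2 <= a < 4)%N && (2 <= b < 4)%N then (if a == b then 0 else 2)
    else if (4 <= a < 8)%N && (4 <= b < 8)%N then d4 (a - 4) (b - 4)
    else if (8 <= a)%N && (8 <= b)%N then d4 (a - 8) (b - 8)
    else 0.
Lemma BNmk : BN = mk 12 12 bn.
Proof. by apply/matrixP => i j; rewrite !mxE. Qed.

Definition lget (l : seq (seq int)) (i j : nat) : int := nth 0 (nth [::] l i) j.

Definition Pd : seq (seq int) :=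
 [:: [:: -8; -4; 0; 0; 0; -2; 2; 2; -2; 0];
     [:: -12; -8; 0; 0; 0; -2; 4; 2; -2; 2];
     [:: 2; 2; 0; 0; 0; 0; 0; 0; 2; 0];
     [:: 4; 2; 0; 0; 0; 0; -2; -2; 0; 0];
     [:: -2; -2; 0; 0; 0; 0; 0; 2; 0; 0];
     [:: 2; 2; 0; 0; 0; 2; 0; 0; 0; 0];
     [:: 4; 2; 1; -1; 1; 1; -1; -1; 1; -1];
     [:: 4; 2; -1; 1; -1; 1; -1; -1; 1; -1];
     [:: -4; -2; 1; 1; 1; -1; 1; 1; -1; 1];
     [:: -4; -2; -1; -1; 1; -1; 1; 1; -1; 1]].
Definition pf (i j : nat) : rat := (lget Pd i j)%:~R / 2.
Definition Pm : 'M[rat]_10 := mk 10 10 pf.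

Definition Wd : seq (seq int) :=
 [:: [:: -2; -1; -2; -3; -1; -2; -1; -1; 0; 0]; [:: 1; 0; 1; 1; 0; 1; 0; 0; 0; 0];
     [:: 0; 0; 0; 0; 0; 0; 0; -1; 0; -1]; [:: 0; 0; 0; 0; 0; 0; 0; 1; 1; 0];
     [:: 0; 0; 0; 0; 0; 0; 1; 1; 1; 1]; [:: 1; 1; 1; 2; 1; 2; 1; 1; 0; 0];
     [:: -2; -1; -2; -4; -2; -2; -1; -1; 0; 0]; [:: -1; -1; -1; -2; 0; -1; -1; -1; 0; 0];
     [:: 1; 1; 2; 2; 1; 1; 1; 1; 0; 0]; [:: -1; 0; 0; 0; 0; 0; -1; -1; 0; 0];
     [:: -1; 0; 0; -1; 0; 0; 0; 0; 1; 0]].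
Definition Cd : seq (seq int) :=
 [:: [:: -4; -2; 0; 0; 0; -1; 1; 1; -1; 0; 0]; [:: -6; -4; 0; 0; 0; -1; 2; 1; -1; 1; 0];
     [:: 1; 1; 0; 0; 0; 0; 0; 0; 1; 0; 0]; [:: 2; 1; 0; 0; 0; 0; -1; -1; 0; 0; 0];
     [:: -1; -1; 0; 0; 0; 0; 0; 1; 0; 0; 0]; [:: 1; 1; 0; 0; 0; 1; 0; 0; 0; 0; 0];
     [:: 2; 1; 0; -1; 0; 0; -1; -1; 0; -1; 1]; [:: 2; 1; -1; 0; -1; 0; -1; -1; 0; -1; 1];
     [:: -2; -1; 0; 0; 0; -1; 0; 0; -1; 0; 1]; [:: -2; -1; -1; -1; 0; -1; 0; 0; -1; 0; 1]].
Definition Wm : 'M[rat]_(11, 10) := mk 11 10 (fun i j => (lget Wd i j)%:~R).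
Definition Cm : 'M[rat]_(10, 11) := mk 10 11 (fun i j => (lget Cd i j)%:~R).
Definition Pinv : 'M[rat]_10 := mk 10 10 (fun i j => (lget Wd i j)%:~R).

Lemma P_gram : Pm *m BK *m Pm^T = BM0.
Proof. rewrite BKmk BM0mk /Pm trmk !mulmk; apply: mk_eq; by vm_compute. Qed.
Lemma PM_WP : PM = Wm *m Pm.
Proof. rewrite PMmk /Pm /Wm mulmk; apply: mk_eq; by vm_compute. Qed.
Lemma P_CPM : Pm = Cm *m PM.
Proof. rewrite PMmk /Pm /Cm mulmk; apply: mk_eq; by vm_compute. Qed.
Lemma id_mk n : (1%:M : 'M[rat]_n) = mk n n (fun i j => (i == j)%:R).
Proof. by apply/matrixP => i j; rewrite !mxE. Qed.
Lemma P_Pinv : Pm *m Pinv = 1%:M.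
Proof. rewrite id_mk /Pm /Pinv mulmk; apply: mk_eq; by vm_compute. Qed.
Lemma Pinv_P : Pinv *m Pm = 1%:M.
Proof. rewrite id_mk /Pm /Pinv mulmk; apply: mk_eq; by vm_compute. Qed.
Definition Zv k (c : 'rV[rat]_k) := forall j, is_int (c 0 j).
Definition Zm k n (A : 'M[rat]_(k, n)) := forall i j, is_int (A i j).

Lemma zspanE k n (A : 'M[rat]_(k, n)) x : zspan A x <-> exists2 c, Zv c & x = c *m A.
Proof.
split.
  case=> c ->; exists (\row_i (c i)%:~R); first by move=> j; rewrite mxE; exact: is_int_int.
  by rewrite mulmx_sum_row; apply: eq_bigr => i _; rewrite mxE.
case=> c Hc ->; exists (fun i => numq (c 0 i)); rewrite mulmx_sum_row.
apply: eq_bigr => i _; rewrite numqK //; exact/is_intE.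
Qed.

Lemma Zv_mul k n (c : 'rV[rat]_k) (A : 'M[rat]_(k, n)) : Zv c -> Zm A -> Zv (c *m A).
Proof. by move=> Hc HA j; rewrite mxE; apply: is_int_sum => i; apply: is_intM. Qed.
Lemma Zv_add k (c d : 'rV[rat]_k) : Zv c -> Zv d -> Zv (c + d).
Proof. by move=> H1 H2 j; rewrite mxE; apply: is_intD. Qed.
Lemma Zv_opp k (c : 'rV[rat]_k) : Zv c -> Zv (- c).
Proof. by move=> H1 j; rewrite mxE; apply: is_intN. Qed.
Lemma Zv_sub k (c d : 'rV[rat]_k) : Zv c -> Zv d -> Zv (c - d).
Proof. by move=> H1 H2; apply: Zv_add => //; apply: Zv_opp. Qed.
Lemma Zv0 k : Zv (0 : 'rV[rat]_k).
Proof. move=> j; rewrite mxE; exact: is_int0. Qed.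
Lemma Zv_scale k (c : 'rV[rat]_k) (z : int) : Zv c -> Zv (z%:~R *: c).
Proof. by move=> H j; rewrite mxE; apply: is_intM => //; apply: is_int_int. Qed.

Section ZS.
Variables (k n : nat) (A : 'M[rat]_(k, n)).
Lemma zspan_add x y : zspan A x -> zspan A y -> zspan A (x + y).
Proof.
move=> /zspanE [c Hc ->] /zspanE [d Hd ->]; apply/zspanE.
by exists (c + d); [apply: Zv_add | rewrite mulmxDl].
Qed.
Lemma zspan_opp x : zspan A x -> zspan A (- x).
Proof.
move=> /zspanE [c Hc ->]; apply/zspanE.
by exists (- c); [apply: Zv_opp | rewrite mulNmx].
Qed.
Lemma zspan_sub x y : zspan A x -> zspan A y -> zspan A (x - y).
Proof. by move=> H1 H2; apply: zspan_add => //; apply: zspan_opp. Qed.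
Lemma zspan0 : zspan A 0.
Proof. by apply/zspanE; exists 0; [apply: Zv0 | rewrite mul0mx]. Qed.
Lemma zspan_scale x (z : int) : zspan A x -> zspan A (z%:~R *: x).
Proof.
move=> /zspanE [c Hc ->]; apply/zspanE.
by exists (z%:~R *: c); [apply: Zv_scale | rewrite scalemxAl].
Qed.
Lemma zspan_row i : zspan A (row i A).
Proof.
apply/zspanE; exists (delta_mx 0 i).
  by move=> j; rewrite mxE; case: (_ && _); [exact: is_int1 | exact: is_int0].
by rewrite -rowE.
Qed.
End ZS.

Lemma zspan_trans k1 k2 n (A : 'M[rat]_(k1, n)) (B : 'M[rat]_(k2, n)) (D : 'M[rat]_(k1, k2)) x :
  A = D *m B -> Zm D -> zspan A x -> zspan B x.
Proof.
move=> -> HD /zspanE [c Hc ->]; apply/zspanE; exists (c *m D); first exact: Zv_mul.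
by rewrite mulmxA.
Qed.

Definition isint (q : rat) : bool := q \is a Num.int.
Lemma isintP q : reflect (is_int q) (isint q).
Proof. by apply: (iffP idP) => /is_intE. Qed.

Lemma Zm_mk m n f : chk2 m n (fun i j => isint (f i j)) -> Zm (mk m n f).
Proof. move=> H i j; rewrite mkE; apply/isintP; exact: (chk2P H (ltn_ord i) (ltn_ord j)). Qed.

Lemma Zm_Wm : Zm Wm. Proof. apply: Zm_mk; by vm_compute. Qed.
Lemma Zm_Cm : Zm Cm. Proof. apply: Zm_mk; by vm_compute. Qed.
Lemma Zm_Pinv : Zm Pinv. Proof. apply: Zm_mk; by vm_compute. Qed.

Lemma Mlat_rowP i : Mlat (row i Pm).
Proof.
rewrite /Mlat P_CPM row_mul; apply/zspanE; exists (row i Cm) => //.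
by move=> j; rewrite mxE; apply: Zm_Cm.
Qed.
Lemma Mlat_zspanP x : Mlat x -> zspan Pm x.
Proof. exact: (zspan_trans PM_WP Zm_Wm). Qed.
Lemma trD m n (x y : 'M[rat]_(m, n)) : (x + y)^T = x^T + y^T.
Proof. by apply/matrixP => i j; rewrite !mxE. Qed.
Lemma trN m n (x : 'M[rat]_(m, n)) : (- x)^T = - x^T.
Proof. by apply/matrixP => i j; rewrite !mxE. Qed.
Lemma trZ m n a (x : 'M[rat]_(m, n)) : (a *: x)^T = a *: x^T.
Proof. by apply/matrixP => i j; rewrite !mxE. Qed.
Section BF.
Variables (n : nat) (B : 'M[rat]_n).
Lemma bformDl x y z : bform B (x + y) z = bform B x z + bform B y z.
Proof. by rewrite /bform !mulmxDl mxE. Qed.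
Lemma bformDr x y z : bform B z (x + y) = bform B z x + bform B z y.
Proof. by rewrite /bform trD mulmxDr mxE. Qed.
Lemma bformNl x z : bform B (- x) z = - bform B x z.
Proof. by rewrite /bform !mulNmx mxE. Qed.
Lemma bformNr x z : bform B z (- x) = - bform B z x.
Proof. by rewrite /bform trN mulmxN mxE. Qed.
Lemma bformBl x y z : bform B (x - y) z = bform B x z - bform B y z.
Proof. by rewrite bformDl bformNl. Qed.
Lemma bformBr x y z : bform B z (x - y) = bform B z x - bform B z y.
Proof. by rewrite bformDr bformNr. Qed.
Lemma bformZl a x z : bform B (a *: x) z = a * bform B x z.
Proof. by rewrite /bform -!scalemxAl mxE. Qed.
Lemma bformZr a x z : bform B z (a *: x) = a * bform B z x.
Proof. by rewrite /bform trZ -scalemxAr mxE. Qed.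
Lemma bform0l z : bform B 0 z = 0.
Proof. by rewrite /bform !mul0mx mxE. Qed.
Lemma bform_sym x y : B^T = B -> bform B x y = bform B y x.
Proof.
move=> HB; rewrite /bform.
have -> : (x *m B *m y^T) 0 0 = ((x *m B *m y^T)^T) 0 0 by rewrite [RHS]mxE.
by rewrite trmx_mul trmxK trmx_mul HB mulmxA.
Qed.
Lemma bform_mx m (A : 'M[rat]_(m, n)) x y :
  bform B (x *m A) (y *m A) = bform (A *m B *m A^T) x y.
Proof. by rewrite /bform trmx_mul !mulmxA. Qed.
End BF.



Definition cx (x : 'rV[rat]_10) (j : nat) : rat := x 0 (inord j).

Lemma BK_sym : BK^T = BK.
Proof. rewrite BKmk trmk; apply: mk_eq; by vm_compute. Qed.

Lemma bformK x y : bform BK x y =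
  cx x 0 * cx y 1 + cx x 1 * cx y 0 - 2 * (cx x 1 * cx y 1)
  - 2 * (cx x 2 * cx y 2 + cx x 3 * cx y 3 + cx x 4 * cx y 4 + cx x 5 * cx y 5
       + cx x 6 * cx y 6 + cx x 7 * cx y 7 + cx x 8 * cx y 8 + cx x 9 * cx y 9).
Proof.
rewrite /bform BKmk {1}(tomkE x) {1}(tomkE y) trmk !mulmk mkE /=.
rewrite /lsum /cx /tomk; cbn [iota foldr].
have E0 : (inord 0 : 'I_1) = 0 by apply/val_inj; rewrite /= inordK.
rewrite !E0 /bk /=.
set X := x 0. set Y := y 0.
ring.
Qed.
Lemma cx_mk f j : (j < 10)%N -> cx (mk 1 10 f) j = f 0%N j.
Proof. by move=> Hj; rewrite /cx mkE inordK. Qed.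
Lemma cx_ord (x : 'rV[rat]_10) (j : 'I_10) : x 0 j = cx x j.
Proof. by rewrite /cx inord_val. Qed.
Lemma cxD (x y : 'rV[rat]_10) j : cx (x + y) j = cx x j + cx y j. Proof. by rewrite /cx mxE. Qed.
Lemma cxN (x : 'rV[rat]_10) j : cx (- x) j = - cx x j. Proof. by rewrite /cx mxE. Qed.
Lemma cxB (x y : 'rV[rat]_10) j : cx (x - y) j = cx x j - cx y j. Proof. by rewrite cxD cxN. Qed.
Lemma cxZ a (x : 'rV[rat]_10) j : cx (a *: x) j = a * cx x j. Proof. by rewrite /cx mxE. Qed.

Lemma Zv_cx (x : 'rV[rat]_10) : (forall j, (j < 10)%N -> is_int (cx x j)) -> Zv x.
Proof. by move=> H j; rewrite cx_ord; apply: H. Qed.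
Lemma cx_Zv (x : 'rV[rat]_10) j : Zv x -> is_int (cx x j).
Proof. by move=> H; apply: H. Qed.

Definition hv : 'rV[rat]_10 := mk 1 10 (fun _ j => if (2 <= j)%N then 1/2 else 0).

Lemma PM_col : PM = col_mx 1%:M hv.
Proof.
apply/matrixP => i j; rewrite PMmk mkE.
case: (@splitP 10 1 i) => k Hk.
  have -> : i = lshift 1 k by apply/val_inj.
  rewrite (@col_mxEu _ 10 1 10) !mxE /pm /= ltn_ord //.
have -> : i = rshift 10 k by apply/val_inj.
by rewrite (@col_mxEd _ 10 1 10) !mxE /pm /=.
Qed.

Lemma is_intP' q : is_int q -> exists z : int, q = z%:~R.
Proof. by []. Qed.

Lemma MlatE (x : 'rV[rat]_10) : Mlat x <-> exists2 z, Zv z & exists t : int, x = z + t%:~R *: hv.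
Proof.
split.
  move=> /zspanE [c Hc ->]; rewrite PM_col -(@hsubmxK _ 1 10 1 c) (@mul_row_col _ 1 10 1 10) mulmx1.
  exists (@lsubmx _ 1 10 1 c).
    by move=> j; rewrite mxE; apply: Hc.
  have [t Ht] : is_int ((@rsubmx _ 1 10 1 c) 0 0) by rewrite mxE; apply: Hc.
  exists t; congr (_ + _); apply/matrixP => i j.
  by rewrite (ord1 i) mxE big_ord1 Ht [in RHS]mxE.
case=> z Hz [t ->]; apply/zspanE; exists (row_mx z (t%:~R *: (1%:M : 'M_1))).
  move=> j; rewrite mxE; case: (@splitP 10 1 j) => k _; first exact: Hz.
  by rewrite (ord1 k) !mxE eqxx mulr1; apply: is_int_int.
rewrite PM_col (@mul_row_col _ 1 10 1 10) mulmx1 -scalemxAl mul1mx //.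
Qed.

Lemma Zv_hv2 : Zv (2 *: hv).
Proof.
apply: Zv_cx => j Hj; rewrite cxZ cx_mk //.
case: (2 <= j)%N; last by rewrite mulr0; exact: is_int0.
have -> : (2 : rat) * (1/2) = 1 by rewrite mul1r mulfV.
exact: is_int1.
Qed.

Lemma Mlat_hv : Mlat hv.
Proof. apply/MlatE; exists 0; first exact: Zv0. by exists 1; rewrite add0r scale1r. Qed.
Lemma Mlat_Zv (x : 'rV[rat]_10) : Zv x -> Mlat x.
Proof. move=> H; apply/MlatE; exists x => //; exists 0; by rewrite scale0r addr0. Qed.
Lemma Mlat_Zvh (x : 'rV[rat]_10) : Zv (x - hv) -> Mlat x.
Proof. move=> H; apply/MlatE; exists (x - hv) => //; exists 1; by rewrite scale1r subrK. Qed.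

Lemma MlatP (x : 'rV[rat]_10) : Mlat x -> Zv x \/ Zv (x - hv).
Proof.
case/MlatE => z Hz [t ->].
have [q [r [-> Hr]]] : exists q r : int, t = q * 2 + r /\ (r = 0 \/ r = 1).
  exists (t %/ 2)%Z, (t %% 2)%Z; split; first exact: divz_eq. lia.
have E : ((q * 2 + r)%:~R : rat) *: hv = q%:~R *: (2 *: hv) + r%:~R *: hv.
  by rewrite intrD intrM scalerDl scalerA.
rewrite E; case: Hr => ->; [left | right].
  rewrite scale0r addr0; apply: Zv_add => //; exact: Zv_scale Zv_hv2.
rewrite scale1r addrA addrK; apply: Zv_add => //; exact: Zv_scale Zv_hv2.
Qed.

Lemma Mlat_add (x y : 'rV[rat]_10) : Mlat x -> Mlat y -> Mlat (x + y). Proof. exact: zspan_add. Qed.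
Lemma Mlat_sub (x y : 'rV[rat]_10) : Mlat x -> Mlat y -> Mlat (x - y). Proof. exact: zspan_sub. Qed.
Lemma Mlat_opp (x : 'rV[rat]_10) : Mlat x -> Mlat (- x). Proof. exact: zspan_opp. Qed.
Lemma Mlat0 : Mlat 0. Proof. exact: zspan0. Qed.
Definition ej (j : nat) : 'rV[rat]_10 := mk 1 10 (fun _ k => (k == j)%:R).
Lemma Mlat_ej j : Mlat (ej j).
Proof.
apply: Mlat_Zv => k; rewrite mkE; case: (_ == _); [exact: is_int1 | exact: is_int0].
Qed.

Lemma not_int_half : ~ is_int (1/2).
Proof. by move/isintP; vm_compute. Qed.

Lemma is_int_eq a b : is_int a -> a = b -> is_int b.
Proof. by move=> H <-. Qed.

Lemma nat2_10 (P : nat -> Prop) : P 2 -> P 3 -> P 4 -> P 5 -> P 6 -> P 7 -> P 8 -> P 9 ->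
  forall j, (2 <= j < 10)%N -> P j.
Proof.
move=> H2 H3 H4 H5 H6 H7 H8 H9 j.
by do 10 (case: j => [|j] //=); move=> /andP [].
Qed.

Lemma dual_coords x : dual BK Mlat x ->
  [/\ is_int (cx x 0), is_int (cx x 1),
      (forall j, (2 <= j < 10)%N -> is_int (2 * cx x j)) &
      is_int (cx x 2 + cx x 3 + cx x 4 + cx x 5 + cx x 6 + cx x 7 + cx x 8 + cx x 9)].
Proof.
move=> H.
have H0 : is_int (cx x 1).
  have := H _ (Mlat_ej 0); rewrite bformK !cx_mk //= => Hi.
  suff -> : cx x 1 = cx x 0 * 0%:R + cx x 1 * 1%:R - 2 * (cx x 1 * 0%:R) -
       2 * (cx x 2 * 0%:R + cx x 3 * 0%:R + cx x 4 * 0%:R + cx x 5 * 0%:R + cx x 6 * 0%:R +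
            cx x 7 * 0%:R + cx x 8 * 0%:R + cx x 9 * 0%:R) by [].
  ring.
split => //.
- have := H _ (Mlat_ej 1); rewrite bformK !cx_mk //= => Hi.
  have E : cx x 0 = (cx x 0 * 1%:R + cx x 1 * 0%:R - 2 * (cx x 1 * 1%:R) -
       2 * (cx x 2 * 0%:R + cx x 3 * 0%:R + cx x 4 * 0%:R + cx x 5 * 0%:R + cx x 6 * 0%:R +
            cx x 7 * 0%:R + cx x 8 * 0%:R + cx x 9 * 0%:R)) + 2 * cx x 1 by ring.
  rewrite E; apply: is_intD => //; apply: is_intM => //; exact: is_int_nat.
- apply: nat2_10; 
  (match goal with |- is_int (2 * cx x ?j) =>
    have := H _ (Mlat_ej j); rewrite bformK !cx_mk //= => Hi;
    suff : is_int (- (2 * cx x j)) by move/is_intN; rewrite opprK end);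
  apply: (is_int_eq Hi); ring.
- have := H _ Mlat_hv; rewrite bformK !cx_mk //= => Hi.
  suff : is_int (- (cx x 2 + cx x 3 + cx x 4 + cx x 5 + cx x 6 + cx x 7 + cx x 8 + cx x 9))
    by move/is_intN; rewrite opprK.
  by apply: (is_int_eq Hi); field.
Qed.
Definition rv (v : seq bool) : 'rV[rat]_10 :=
  mk 1 10 (fun _ j => if (2 <= j)%N then (nth false v (j - 2)%N)%:R / 2 else 0).
Definition bits (x : 'rV[rat]_10) : seq bool := mkseq (fun k => ~~ isint (cx x (k + 2))) 8.
Lemma size_bits x : size (bits x) = 8%N. Proof. by rewrite size_mkseq. Qed.

Lemma size8 (v : seq bool) : size v = 8%N ->
  exists b0 b1 b2 b3 b4 b5 b6 b7, v = [:: b0; b1; b2; b3; b4; b5; b6; b7].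
Proof.
case: v => [|b0 [|b1 [|b2 [|b3 [|b4 [|b5 [|b6 [|b7 [|b8 v]]]]]]]]] //= _.
by exists b0, b1, b2, b3, b4, b5, b6, b7.
Qed.

Lemma half_lemma a : is_int (2 * a) -> is_int (a - (~~ isint a)%:R / 2).
Proof.
move=> [z Hz]; case: (isintP a) => Ha /=.
  by rewrite mul0r subr0.
have [q [r [Ez Hr]]] : exists q r : int, z = q * 2 + r /\ (r = 0 \/ r = 1).
  exists (z %/ 2)%Z, (z %% 2)%Z; split; first exact: divz_eq. lia.
have Ea : a = z%:~R / 2 by rewrite -Hz; field.
case: Hr => Er; rewrite Ez Er in Ea.
  by exfalso; apply: Ha; exists q; rewrite Ea addr0 intrM; field.
by exists q; rewrite Ea intrD intrM; field.
Qed.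

Lemma not_odd_of_int n : is_int (n%:R / 2) -> ~~ odd n.
Proof.
move=> H; apply/negP => Ho; apply: not_int_half.
have E : n = (n./2 * 2 + 1)%N by rewrite -{1}(odd_double_half n) Ho -muln2 addnC.
have -> : (1 / 2 : rat) = n%:R / 2 - (n./2)%:R.
  by rewrite {1}E natrD natrM; field.
by apply: is_intB => //; exact: is_int_nat.
Qed.

Lemma int_of_even n : ~~ odd n -> is_int (n%:R / 2).
Proof.
move=> He; exists (n./2)%:Z; rewrite -{1}(even_halfK He) -muln2 natrM.
by rewrite mulfK.
Qed.

Lemma cx_rv v j : (j < 10)%N ->
  cx (rv v) j = if (2 <= j)%N then (nth false v (j - 2)%N)%:R / 2 else 0.
Proof. exact: cx_mk. Qed.
Lemma cx_hv j : (j < 10)%N -> cx hv j = if (2 <= j)%N then 1/2 else 0.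
Proof. exact: cx_mk. Qed.

Lemma bits_Zv x : dual BK Mlat x -> Zv (x - rv (bits x)).
Proof.
case/dual_coords => H0 H1 H2 _.
apply: Zv_cx => j Hj; rewrite cxB cx_rv //.
case: j Hj => [|[|j]] Hj /=; rewrite ?subr0 //.
rewrite ?subSS ?subn0 /bits nth_mkseq; last by lia.
rewrite addn2; apply: half_lemma; apply: H2; lia.
Qed.

Lemma count8 (b0 b1 b2 b3 b4 b5 b6 b7 : bool) :
  (count id [:: b0; b1; b2; b3; b4; b5; b6; b7])%:R =
  b0%:R + b1%:R + b2%:R + b3%:R + b4%:R + b5%:R + b6%:R + b7%:R :> rat.
Proof. by rewrite /= !natrD ?addn0 ?addr0 !addrA. Qed.

Lemma bits_even x : dual BK Mlat x -> ~~ odd (count id (bits x)).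
Proof.
move=> Hd; have Hz := bits_Zv Hd; case/dual_coords: Hd => _ _ _ Hs.
have [b0 [b1 [b2 [b3 [b4 [b5 [b6 [b7 Eb]]]]]]]] := size8 (size_bits x).
apply: not_odd_of_int; rewrite Eb count8.
set z := x - rv (bits x).
have Ex : forall j, (j < 10)%N -> cx x j = cx z j + cx (rv (bits x)) j.
  by move=> j _; rewrite /z cxB subrK.
move: Hs; rewrite !Ex // !cx_rv // Eb /= => Hs.
have Hzi : forall j, is_int (cx z j) by move=> j; apply: Hz.
have := is_intB Hs (is_intD (is_intD (is_intD (is_intD (is_intD (is_intD (is_intD
  (Hzi 2) (Hzi 3)) (Hzi 4)) (Hzi 5)) (Hzi 6)) (Hzi 7)) (Hzi 8)) (Hzi 9)).
move=> H; by apply: (is_int_eq H); field.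
Qed.

Lemma Zv_ints (z : 'rV[rat]_10) : Zv z -> forall j, is_int (cx z j).
Proof. by move=> H j; apply: H. Qed.

Lemma bform_rv_Zv v z : size v = 8%N -> Zv z -> is_int (bform BK (rv v) z).
Proof.
move=> Hs /Zv_ints Hz; have [b0 [b1 [b2 [b3 [b4 [b5 [b6 [b7 ->]]]]]]]] := size8 Hs.
rewrite bformK !cx_rv //=.
have H : is_int (- (b0%:R * cx z 2 + b1%:R * cx z 3 + b2%:R * cx z 4 + b3%:R * cx z 5
     + b4%:R * cx z 6 + b5%:R * cx z 7 + b6%:R * cx z 8 + b7%:R * cx z 9)).
  apply: is_intN; repeat apply: is_intD; apply: is_intM; (exact: is_int_nat || exact: Hz).
by apply: (is_int_eq H); field.
Qed.

Lemma bform_rv_hv v : size v = 8%N -> bform BK (rv v) hv = - (count id v)%:R / 2.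
Proof.
move=> Hs; have [b0 [b1 [b2 [b3 [b4 [b5 [b6 [b7 ->]]]]]]]] := size8 Hs.
rewrite count8 bformK !cx_rv // !cx_hv //=; by field.
Qed.

Lemma bform_rv_rv v : size v = 8%N -> bform BK (rv v) (rv v) = - (count id v)%:R / 2.
Proof.
move=> Hs; have [b0 [b1 [b2 [b3 [b4 [b5 [b6 [b7 ->]]]]]]]] := size8 Hs.
have sq : forall b : bool, (b%:R / 2) * (b%:R / 2) = (b%:R : rat) / 4.
  by case; rewrite /=; field.
rewrite count8 bformK !cx_rv //= !sq; by field.
Qed.

Definition ev (v : seq bool) := (size v == 8%N) && ~~ odd (count id v).

Lemma rv_dual v : ev v -> dual BK Mlat (rv v).
Proof.
case/andP => /eqP Hs He y /MlatP [Hy|Hy]; first exact: bform_rv_Zv.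
have -> : y = (y - hv) + hv by rewrite subrK.
rewrite bformDr; apply: is_intD; first exact: bform_rv_Zv.
rewrite bform_rv_hv // mulNr; apply: is_intN; exact: int_of_even.
Qed.

Definition negv (v : seq bool) := map negb v.
Definition sim (v w : seq bool) := (v == w) || (v == negv w).

Lemma bool_l1 (b c : bool) : is_int ((b%:R - c%:R) / 2) -> b = c.
Proof.
by case: b; case: c => //= /isintP; vm_compute.
Qed.
Lemma bool_l2 (b c : bool) : is_int ((b%:R - c%:R) / 2 - 1/2) -> b = ~~ c.
Proof.
by case: b; case: c => //= /isintP; vm_compute.
Qed.

Lemma rv_sim v w : size v = 8%N -> size w = 8%N -> (Mlat (rv v - rv w) <-> sim v w).
Proof.
move=> Hv Hw; split.
  case/MlatP => H; apply/orP; [left | right]; apply/eqP.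
    apply: (eq_from_nth (x0 := false)); first by rewrite Hv Hw.
    move=> k; rewrite Hv => Hk; apply: bool_l1.
    have := H (inord (k + 2)%N); rewrite cx_ord inordK; last by lia.
    rewrite cxB !cx_rv; try lia.
    rewrite (_ : (2 <= k + 2)%N = true); last by lia.
    rewrite addnK => Hi; apply: (is_int_eq Hi); by field.
  apply: (eq_from_nth (x0 := false)); first by rewrite size_map Hv Hw.
  move=> k; rewrite Hv => Hk; rewrite (nth_map false) ?Hw //; apply: bool_l2.
  have := H (inord (k + 2)%N); rewrite cx_ord inordK; last by lia.
  rewrite !cxB !cx_rv ?cx_hv; try lia.
  rewrite (_ : (2 <= k + 2)%N = true); last by lia.
  rewrite addnK => Hi; apply: (is_int_eq Hi); by field.
case/orP => /eqP ->; first by rewrite subrr; exact: Mlat0.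
apply: Mlat_Zvh; apply: Zv_cx => j Hj.
rewrite !cxB !cx_rv // cx_hv //; case: ifP => _; last first.
  by rewrite !subr0; exact: is_int0.
rewrite (nth_map false); last by rewrite Hw; move: Hj; case: j => [|[|j]] //= Hj; lia.
case: (nth false w (j - 2)) => /=; by move/isintP: is_int0 => _; apply/isintP; vm_compute.
Qed.

Lemma Mlat_even m : Mlat m -> is_int (bform BK m m / 2).
Proof.
case/MlatP => H.
  have Hz := Zv_ints H.
  have Hi : is_int (cx m 0 * cx m 1 - cx m 1 * cx m 1 - (cx m 2 * cx m 2 + cx m 3 * cx m 3
     + cx m 4 * cx m 4 + cx m 5 * cx m 5 + cx m 6 * cx m 6 + cx m 7 * cx m 7 + cx m 8 * cx m 8
     + cx m 9 * cx m 9)).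
    repeat (apply: is_intB || apply: is_intD || apply: is_intM); exact: Hz.
  by apply: (is_int_eq Hi); rewrite bformK; field.
have Hz := Zv_ints H; set z := m - hv in Hz.
have Em : m = z + hv by rewrite /z subrK.
have Hi : is_int (cx z 0 * cx z 1 - cx z 1 * cx z 1 - (cx z 2 * cx z 2 + cx z 3 * cx z 3
     + cx z 4 * cx z 4 + cx z 5 * cx z 5 + cx z 6 * cx z 6 + cx z 7 * cx z 7 + cx z 8 * cx z 8
     + cx z 9 * cx z 9) - (cx z 2 + cx z 3 + cx z 4 + cx z 5 + cx z 6 + cx z 7 + cx z 8 + cx z 9)
     - 2).
  apply: is_intB; last by exact: is_int_nat.
  repeat (apply: is_intB || apply: is_intD || apply: is_intM); exact: Hz.
apply: (is_int_eq Hi); rewrite Em bformK !cxD !cx_hv //=; by field.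
Qed.

Lemma q_wd x m : dual BK Mlat x -> Mlat m ->
  eq_mod2 (bform BK (x + m) (x + m)) (bform BK x x).
Proof.
move=> Hx Hm.
have -> : bform BK (x + m) (x + m) = bform BK x x + 2 * (bform BK x m + bform BK m m / 2).
  rewrite !bformDl !bformDr (bform_sym _ _ BK_sym : bform BK m x = bform BK x m); by field.
apply: eqm2_add2; apply: is_intD; [exact: Hx | exact: Mlat_even].
Qed.

Lemma q_wd' x y : dual BK Mlat x -> Mlat (y - x) ->
  eq_mod2 (bform BK y y) (bform BK x x).
Proof. by move=> Hx Hm; have := q_wd Hx Hm; rewrite addrC subrK. Qed.
Lemma permF_val (s : 'S_8) (k : 'I_10) :
  nat_of_ord (permF s k) = if (k < 2)%N then nat_of_ord k else (nat_of_ord (s (inord (k - 2)%N)) + 2)%N.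
Proof.
rewrite /permF /=; case: ifP => // _; rewrite inordK //.
have := ltn_ord (s (inord (k - 2))); lia.
Qed.

Lemma permF_inj (s : 'S_8) : injective (permF s).
Proof.
move=> k l E; apply: ord_inj; have := congr1 (@nat_of_ord 10) E; rewrite !permF_val.
case: ifP => Hk; case: ifP => Hl //.
- move=> Hv; have := ltn_ord (s (inord (l - 2))); lia.
- move=> Hv; have := ltn_ord (s (inord (k - 2))); lia.
move/eqP; rewrite eqn_add2r => /eqP /ord_inj /perm_inj /(congr1 (@nat_of_ord 8)).
rewrite !inordK; [|have := ltn_ord l; lia | have := ltn_ord k; lia]; lia.
Qed.

Definition ps (s : 'S_8) : 'S_10 := perm (@permF_inj s).

Lemma ps_val (s : 'S_8) (k : 'I_10) :
  nat_of_ord (ps s k) = if (k < 2)%N then nat_of_ord k else (nat_of_ord (s (inord (k - 2)%N)) + 2)%N.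
Proof. by rewrite permE permF_val. Qed.

Lemma gperm_ps s : gperm s = perm_mx (ps s).
Proof. by apply/matrixP => i j; rewrite !mxE permE. Qed.

Lemma psM s t : ps (s * t)%g = (ps s * ps t)%g.
Proof.
apply/permP => k; apply: ord_inj; rewrite permM !ps_val.
case: ifP => Hk; first by rewrite Hk.
rewrite ifF; last by lia.
by rewrite permM addnK inord_val.
Qed.

Lemma ps1 : ps 1%g = 1%g.
Proof.
apply/permP => k; apply: ord_inj; rewrite ps_val perm1 perm1.
case: ifP => // Hk; rewrite inordK; [lia | have := ltn_ord k; lia].
Qed.

Lemma psV s : ((ps s)^-1)%g = ps (s^-1)%g.
Proof. by apply: (mulgI (ps s)); rewrite mulgV -psM mulgV ps1. Qed.

Lemma gpermM s t : gperm (s * t)%g = gperm s *m gperm t.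
Proof. by rewrite !gperm_ps psM perm_mxM. Qed.
Lemma gperm1 : gperm 1%g = 1%:M.
Proof. by rewrite gperm_ps ps1 perm_mx1. Qed.

Lemma mul_gperm (x : 'rV[rat]_10) s j : (x *m gperm s) 0 j = x 0 (ps (s^-1)%g j).
Proof.
have Hj : ps s (ps (s^-1)%g j) = j by rewrite -permM -psM mulVg ps1 perm1.
rewrite gperm_ps mxE (bigD1 (ps (s^-1)%g j)) //= big1 => [|k Hk]; rewrite !mxE.
  by rewrite Hj eqxx mulr1 addr0.
case: eqP => [E|_]; last by rewrite mulr0.
by move: Hk; rewrite -E -permM -psM mulgV ps1 perm1 eqxx.
Qed.

Lemma ps_eq0 s (k : 'I_10) : (nat_of_ord (ps s k) == 0%N) = (nat_of_ord k == 0%N).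
Proof. rewrite ps_val; case: ifP => //; lia. Qed.
Lemma ps_eq1 s (k : 'I_10) : (nat_of_ord (ps s k) == 1%N) = (nat_of_ord k == 1%N).
Proof. rewrite ps_val; case: ifP => //; lia. Qed.
Lemma ps_ge2 s (k : 'I_10) : (2 <= nat_of_ord (ps s k))%N = (2 <= nat_of_ord k)%N.
Proof. rewrite ps_val; case: ifP => //; lia. Qed.

Lemma BK_inv s : gperm s *m BK *m (gperm s)^T = BK.
Proof.
rewrite gperm_ps tr_perm_mx -row_permE -col_permE.
apply/matrixP => i j; rewrite !mxE /bk.
rewrite (inj_eq perm_inj) /=.
by rewrite !ps_eq0 !ps_eq1.
Qed.

Lemma bform_gperm s x y : bform BK (x *m gperm s) (y *m gperm s) = bform BK x y.
Proof. by rewrite bform_mx BK_inv. Qed.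

Lemma hv_gperm s : hv *m gperm s = hv.
Proof.
apply/matrixP => i j; rewrite (ord1 i) mul_gperm !mkE.
by rewrite ps_ge2.
Qed.

Lemma Zm_gperm s : Zm (gperm s).
Proof. move=> i j; rewrite mxE; case: (_ == _); [exact: is_int1 | exact: is_int0]. Qed.

Lemma Mlat_gperm s x : Mlat x -> Mlat (x *m gperm s).
Proof.
case/MlatE => z Hz [t ->]; apply/MlatE; exists (z *m gperm s).
  exact: Zv_mul (Zm_gperm s).
by exists t; rewrite mulmxDl -scalemxAl hv_gperm.
Qed.

Lemma gpermVK s (y : 'rV[rat]_10) : y *m gperm (s^-1)%g *m gperm s = y.
Proof. by rewrite -mulmxA -gpermM mulVg gperm1 mulmx1. Qed.
Lemma gpermKV s (y : 'rV[rat]_10) : y *m gperm s *m gperm (s^-1)%g = y.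
Proof. by rewrite -mulmxA -gpermM mulgV gperm1 mulmx1. Qed.
Fixpoint allbits (n : nat) : seq (seq bool) :=
  if n is n'.+1 then [seq b :: v | b <- [:: false; true], v <- allbits n'] else [:: [::]].

Definition xorv (v w : seq bool) : seq bool := [seq p.1 (+) p.2 | p <- zip v w].
Definition bb (v w : seq bool) : bool := odd (count id [seq p.1 && p.2 | p <- zip v w]).
Definition qb (v : seq bool) : bool := odd (count id v)./2.
Definition pairv (a b : nat) : seq bool := mkseq (fun k => (k == a) || (k == b)) 8.
Definition bvec (i : nat) : seq bool := pairv i i.+1.
Definition zerov : seq bool := nseq 8 false.
Definition normv (v : seq bool) := if nth false v 7 then negv v else v.

Definition evens7 := [seq v <- allbits 8 | ev v && ~~ nth false v 7].
Definition od := [seq v <- evens7 | qb v].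

Definition pn (a : seq bool) := if count id a == 6 then negv a else a.
Definition common (p q : seq bool) := find id [seq x.1 && x.2 | x <- zip p q].
Definition other (p : seq bool) (c : nat) := find id [seq (nth false p k) && (k != c) | k <- iota 0 8].
Definition mksl (l : seq (seq bool)) : seq nat :=
  let P := map pn l in
  let s1 := common (nth [::] P 0) (nth [::] P 1) in
  let s2 := common (nth [::] P 1) (nth [::] P 2) in
  let s3 := common (nth [::] P 2) (nth [::] P 3) in
  let s4 := common (nth [::] P 3) (nth [::] P 4) in
  let s5 := common (nth [::] P 4) (nth [::] P 5) in
  let s0 := other (nth [::] P 0) s1 in
  let s6 := other (nth [::] P 5) s5 in
  let s7 := find (fun k => k \notin [:: s0; s1; s2; s3; s4; s5; s6]) (iota 0 8) in
  [:: s0; s1; s2; s3; s4; s5; s6; s7].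

Definition leaf (l : seq (seq bool)) : bool :=
  let sl := mksl l in
  uniq sl && all (fun i => (i < 8)%N) sl &&
  all (fun i => sim (nth [::] l i) (pairv (nth 0%N sl i) (nth 0%N sl i.+1))) (iota 0 6).

Definition srch : bool :=
  all (fun a0 =>
  all (fun a1 => if bb a0 a1 then
  all (fun a2 => if bb a1 a2 && ~~ bb a0 a2 then
  all (fun a3 => if bb a2 a3 && ~~ bb a0 a3 && ~~ bb a1 a3 then
  all (fun a4 => if bb a3 a4 && ~~ bb a0 a4 && ~~ bb a1 a4 && ~~ bb a2 a4 then
  all (fun a5 => if bb a4 a5 && ~~ bb a0 a5 && ~~ bb a1 a5 && ~~ bb a2 a5 && ~~ bb a3 a5 then
     leaf [:: a0; a1; a2; a3; a4; a5] else true) od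
  else true) od else true) od else true) od else true) od) od.

Lemma srch_true : srch.
Proof. Time vm_compute. reflexivity. Qed.

Lemma allbitsP (v : seq bool) : v \in allbits (size v).
Proof.
elim: v => [|b v IH] //=.
by case: b; rewrite !mem_cat (map_f _ IH) ?orbT.
Qed.
Lemma allbits8 (v : seq bool) : size v = 8%N -> v \in allbits 8.
Proof. by move=> <-; exact: allbitsP. Qed.

Definition chk1 (P : seq bool -> bool) := all P (allbits 8).
Lemma chk1P P : chk1 P -> forall v, size v = 8%N -> P v.
Proof. by move=> /allP H v /allbits8 /H. Qed.
Definition chk2b (P : seq bool -> seq bool -> bool) :=
  all (fun v => all (P v) (allbits 8)) (allbits 8).
Lemma chk2bP P : chk2b P -> forall v w, size v = 8%N -> size w = 8%N -> P v w.
Proof. by move=> /allP H v w /allbits8 /H /allP Hv /allbits8 /Hv. Qed.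

Lemma ev_size v : ev v -> size v = 8%N. Proof. by case/andP => /eqP. Qed.

Lemma fin_xor_ev : forall v w, size v = 8%N -> size w = 8%N -> ev v -> ev w -> ev (xorv v w).
Proof.
move=> v w Hv Hw; have := chk2bP (P := fun v w => ev v ==> ev w ==> ev (xorv v w)) _ Hv Hw.
by move=> /(_ ltac:(by vm_compute)) /implyP H /H /implyP.
Qed.

Lemma fin_qb : forall v w, ev v -> ev w -> qb (xorv v w) = qb v (+) qb w (+) bb v w.
Proof.
move=> v w Hv Hw.
have := chk2bP (P := fun v w => ev v ==> ev w ==> (qb (xorv v w) == qb v (+) qb w (+) bb v w)) _
  (ev_size Hv) (ev_size Hw).
by move=> /(_ ltac:(by vm_compute)); rewrite Hv Hw /= => /eqP.
Qed.

Lemma fin_norm : forall v, ev v ->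
  [/\ ev (normv v), sim (normv v) v, qb (normv v) = qb v & ~~ nth false (normv v) 7].
Proof.
move=> v Hv.
have := chk1P (P := fun v => ev v ==> [&& ev (normv v), sim (normv v) v, qb (normv v) == qb v
   & ~~ nth false (normv v) 7]) _ (ev_size Hv).
by move=> /(_ ltac:(by vm_compute)); rewrite Hv /= => /and4P [? ? /eqP ? ?].
Qed.

Lemma fin_normbb : forall v w, ev v -> ev w -> bb (normv v) (normv w) = bb v w.
Proof.
move=> v w Hv Hw.
have := chk2bP (P := fun v w => ev v ==> ev w ==> (bb (normv v) (normv w) == bb v w)) _
  (ev_size Hv) (ev_size Hw).
by move=> /(_ ltac:(by vm_compute)); rewrite Hv Hw /= => /eqP.
Qed.

Lemma fin_simqb : forall v w, ev v -> ev w -> sim v w -> qb v = qb w.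
Proof.
move=> v w Hv Hw.
have := chk2bP (P := fun v w => ev v ==> ev w ==> sim v w ==> (qb v == qb w)) _
  (ev_size Hv) (ev_size Hw).
by move=> /(_ ltac:(by vm_compute)); rewrite Hv Hw /= => /implyP H /H /eqP.
Qed.

Definition recb (c : seq bool) : seq bool :=
  foldr (fun i acc => if nth false c i then xorv (bvec i) acc else acc) zerov (iota 0 6).
Definition dec (v : seq bool) : seq bool := [seq odd (count id (take i.+1 (normv v))) | i <- iota 0 6].

Lemma fin_dec : forall v, ev v -> sim v (recb (dec v)).
Proof.
move=> v Hv.
have := chk1P (P := fun v => ev v ==> sim v (recb (dec v))) _ (ev_size Hv).
by move=> /(_ ltac:(by vm_compute)); rewrite Hv.
Qed.

Lemma od_mem v : ev v -> ~~ nth false v 7 -> qb v -> v \in od.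
Proof.
move=> Hv H7 Hq; rewrite /od mem_filter Hq /evens7 mem_filter Hv H7 /=.
exact: allbits8 (ev_size Hv).
Qed.

Lemma size_xorv v w : size (xorv v w) = minn (size v) (size w).
Proof. by rewrite size_map size_zip. Qed.
Lemma size_negv v : size (negv v) = size v. Proof. by rewrite size_map. Qed.
Lemma negvK v : negv (negv v) = v.
Proof. by rewrite /negv -map_comp map_id_in // => x _ /=; rewrite negbK. Qed.
Lemma xorv_negl v w : size v = size w -> xorv (negv v) w = negv (xorv v w).
Proof. elim: v w => [|a v IH] [|b w] // [E] /=; congr (_ :: _); [by case: a; case: b | exact: IH E]. Qed.
Lemma xorv_negr v w : size v = size w -> xorv v (negv w) = negv (xorv v w).
Proof. elim: v w => [|a v IH] [|b w] // [E] /=; congr (_ :: _); [by case: a; case: b | exact: IH E]. Qed.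
Lemma xorv_self v : xorv v v = nseq (size v) false.
Proof. elim: v => [|a v IH] //=; congr (_ :: _); [by case: a | exact: IH]. Qed.
Lemma nth_xorv v w k : size v = size w -> nth false (xorv v w) k = nth false v k (+) nth false w k.
Proof.
elim: v w k => [|a v IH] [|b w] [|k] //= [E]; exact: IH.
Qed.

Definition s8 (v : seq bool) := size v = 8%N.

Lemma sim_refl v : sim v v. Proof. by rewrite /sim eqxx. Qed.
Lemma sim_sym v w : sim v w -> sim w v.
Proof. by case/orP => /eqP ->; rewrite /sim ?eqxx // negvK eqxx orbT. Qed.
Lemma sim_trans u v w : sim u v -> sim v w -> sim u w.
Proof.
case/orP => /eqP -> //; case/orP => /eqP ->; rewrite /sim ?eqxx ?orbT //.
by rewrite negvK eqxx.
Qed.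
Lemma sim_xor v v' w w' : s8 v -> s8 v' -> s8 w -> s8 w' ->
  sim v v' -> sim w w' -> sim (xorv v w) (xorv v' w').
Proof.
move=> Hv Hv' Hw Hw'.
case/orP => /eqP ->; case/orP => /eqP ->; rewrite /sim.
- by rewrite eqxx.
- by rewrite xorv_negr ?Hv' ?Hw' // eqxx orbT.
- by rewrite xorv_negl ?Hv' ?Hw' // eqxx orbT.
by rewrite xorv_negl ?size_negv ?Hv' ?Hw' // xorv_negr ?Hv' ?Hw' // negvK eqxx.
Qed.

Lemma s8_xor v w : s8 v -> s8 w -> s8 (xorv v w).
Proof. by rewrite /s8 size_xorv => -> ->. Qed.
Lemma s8_bvec i : s8 (bvec i). Proof. by rewrite /s8 size_mkseq. Qed.
Lemma s8_zero : s8 zerov. Proof. by rewrite /s8 size_nseq. Qed.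

Section Fold.
Variables (G1 G2 : seq bool -> seq bool).
Hypothesis G1ev : forall u, ev u -> ev (G1 u).
Hypothesis G2ev : forall u, ev u -> ev (G2 u).
Hypothesis G1x : forall u w, ev u -> ev w -> sim (G1 (xorv u w)) (xorv (G1 u) (G1 w)).
Hypothesis G2x : forall u w, ev u -> ev w -> sim (G2 (xorv u w)) (xorv (G2 u) (G2 w)).
Hypothesis Gb : forall i, (i < 6)%N -> sim (G1 (bvec i)) (G2 (bvec i)).

Lemma ev_zero : ev zerov. Proof. by []. Qed.
Lemma ev_bvec i : (i < 6)%N -> ev (bvec i).
Proof. by do 6 (case: i => [|i] //). Qed.

Lemma Gzero (G : seq bool -> seq bool) : (forall u, ev u -> ev (G u)) ->
  (forall u w, ev u -> ev w -> sim (G (xorv u w)) (xorv (G u) (G w))) ->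
  sim (G zerov) zerov.
Proof.
move=> Hev Hx; have := Hx _ _ ev_zero ev_zero.
by rewrite !xorv_self (ev_size (Hev _ ev_zero)).
Qed.

Lemma fold_sim (c : seq bool) : sim (G1 (recb c)) (G2 (recb c)).
Proof.
rewrite /recb.
have : forall i, i \in iota 0 6 -> (i < 6)%N by move=> i; rewrite mem_iota.
suff H : forall l, (forall i, i \in l -> (i < 6)%N) ->
   ev (foldr (fun i acc => if nth false c i then xorv (bvec i) acc else acc) zerov l) /\
   sim (G1 (foldr (fun i acc => if nth false c i then xorv (bvec i) acc else acc) zerov l))
       (G2 (foldr (fun i acc => if nth false c i then xorv (bvec i) acc else acc) zerov l)).
  by move=> Hl; case: (H _ Hl).
elim=> [|i l IH] Hl /=.
  split => //; apply: (sim_trans (Gzero G1ev G1x)); apply: sim_sym; exact: (Gzero G2ev G2x).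
have Hi : (i < 6)%N by apply: Hl; rewrite inE eqxx.
have Hl' : forall j, j \in l -> (j < 6)%N by move=> j Hj; apply: Hl; rewrite inE Hj orbT.
case: (IH Hl').
set r := foldr _ _ l => Hr Hs.
case: (nth false c i) => //.
have Hb := ev_bvec Hi.
split; first exact: fin_xor_ev (ev_size Hb) (ev_size Hr) Hb Hr.
apply: (sim_trans (G1x Hb Hr)); apply: sim_sym; apply: (sim_trans (G2x Hb Hr)).
apply: sim_xor; rewrite /s8 ?(ev_size (G1ev Hb)) ?(ev_size (G1ev Hr))
   ?(ev_size (G2ev Hb)) ?(ev_size (G2ev Hr)) //.
  exact: sim_sym (Gb Hi).
exact: sim_sym.
Qed.
End Fold.

Definition act (s : 'S_8) (v : seq bool) : seq bool :=
  mkseq (fun k => nth false v (s^-1 (inord k))%g) 8.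

Lemma s8_act s v : s8 (act s v). Proof. by rewrite /s8 size_mkseq. Qed.

Lemma nth_act s v k : (k < 8)%N -> nth false (act s v) k = nth false v (s^-1 (inord k))%g.
Proof. by move=> Hk; rewrite nth_mkseq. Qed.

Lemma act_xor s v w : s8 v -> s8 w -> act s (xorv v w) = xorv (act s v) (act s w).
Proof.
move=> Hv Hw; apply: (eq_from_nth (x0 := false)).
  by rewrite size_xorv !s8_act.
move=> k; rewrite s8_act => Hk.
by rewrite nth_xorv ?(s8_act s v) ?(s8_act s w) // !nth_act // nth_xorv ?Hv ?Hw.
Qed.

Lemma act_neg s v : s8 v -> act s (negv v) = negv (act s v).
Proof.
move=> Hv; apply: (eq_from_nth (x0 := false)).
  by rewrite size_negv !s8_act.
move=> k; rewrite s8_act => Hk.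
rewrite (nth_map false) ?(s8_act s v) // !nth_act // (nth_map false) // Hv.
exact: ltn_ord.
Qed.

Lemma act_sim s v w : s8 w -> sim v w -> sim (act s v) (act s w).
Proof.
move=> Hw; case/orP => /eqP ->; first exact: sim_refl.
by rewrite act_neg // /sim eqxx orbT.
Qed.

Lemma count_mk (f : nat -> bool) n : count id (mkseq f n) = (\sum_(k < n) f k)%N.
Proof.
elim: n => [|n IH]; first by rewrite big_ord0.
have E : iota 0 n.+1 = iota 0 n ++ [:: n] by rewrite -addn1 iotaD.
by rewrite big_ord_recr -IH /mkseq E map_cat count_cat /= addn0.
Qed.

Lemma act_count s v : s8 v -> count id (act s v) = count id v.
Proof.
move=> Hv; rewrite count_mk -{2}(mkseq_nth false v) Hv count_mk.
rewrite [RHS](reindex_inj (@perm_inj _ (s^-1)%g)) /=.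
by apply: eq_bigr => k _; rewrite inord_val.
Qed.

Lemma act_ev s v : ev v -> ev (act s v).
Proof.
case/andP => /eqP Hv He; apply/andP; split; first by rewrite s8_act.
by rewrite act_count.
Qed.

Lemma perm_nat (s : 'S_8) k a : (k < 8)%N -> (a < 8)%N ->
  ((s^-1)%g (inord k) == a :> nat) = (k == s (inord a) :> nat).
Proof.
move=> Hk Ha; apply/eqP/eqP => E.
  have -> : (inord a : 'I_8) = (s^-1)%g (inord k) by apply: ord_inj; rewrite inordK.
  by rewrite permKV inordK.
have : (inord k : 'I_8) = s (inord a) by apply: ord_inj; rewrite inordK.
by move=> ->; rewrite permK inordK.
Qed.

Lemma act_pair s a b : (a < 8)%N -> (b < 8)%N ->
  act s (pairv a b) = pairv (s (inord a)) (s (inord b)).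
Proof.
move=> Ha Hb; apply: (eq_from_nth (x0 := false)); first by rewrite s8_act size_mkseq.
move=> k; rewrite s8_act => Hk.
rewrite nth_act // !nth_mkseq //.
by rewrite !perm_nat.
Qed.

Lemma act_bvec s i : (i < 7)%N ->
  act s (bvec i) = pairv (s (inord i)) (s (inord i.+1)).
Proof. move=> Hi; apply: act_pair; lia. Qed.

Lemma leaf_perm l : leaf l ->
  exists s : 'S_8, forall i, (i < 6)%N -> sim (nth [::] l i) (act s (bvec i)).
Proof.
rewrite /leaf; set sl := mksl l; case/andP => /andP [Hu Ha] Hs.
have Hsz : size sl = 8%N by [].
have Hlt : forall i, (i < 8)%N -> (nth 0%N sl i < 8)%N.
  by move=> i Hi; move/all_nthP: Ha; apply; rewrite Hsz.
pose f := fun (i : 'I_8) => (inord (nth 0%N sl i) : 'I_8).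
have f_inj : injective f.
  move=> i j /(congr1 (@nat_of_ord 8)); rewrite /f !inordK ?Hlt //.
  move/eqP; rewrite nth_uniq ?Hsz // => /eqP; exact: ord_inj.
exists (perm f_inj) => i Hi.
rewrite act_bvec; last by lia.
rewrite !permE /f !inordK ?Hlt; try lia.
by move/allP: Hs; apply; rewrite mem_iota.
Qed.

Lemma srch_leaf a0 a1 a2 a3 a4 a5 :
  a0 \in od -> a1 \in od -> a2 \in od -> a3 \in od -> a4 \in od -> a5 \in od ->
  bb a0 a1 -> bb a1 a2 -> ~~ bb a0 a2 -> bb a2 a3 -> ~~ bb a0 a3 -> ~~ bb a1 a3 ->
  bb a3 a4 -> ~~ bb a0 a4 -> ~~ bb a1 a4 -> ~~ bb a2 a4 ->
  bb a4 a5 -> ~~ bb a0 a5 -> ~~ bb a1 a5 -> ~~ bb a2 a5 -> ~~ bb a3 a5 ->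
  leaf [:: a0; a1; a2; a3; a4; a5].
Proof.
move=> H0 H1 H2 H3 H4 H5 B01 B12 B02 B23 B03 B13 B34 B04 B14 B24 B45 B05 B15 B25 B35.
have := srch_true; rewrite /srch.
move/allP/(_ a0 H0)/allP/(_ a1 H1); rewrite B01.
move/allP/(_ a2 H2); rewrite B12 (negbTE B02).
move/allP/(_ a3 H3); rewrite B23 (negbTE B03) (negbTE B13).
move/allP/(_ a4 H4); rewrite B34 (negbTE B04) (negbTE B14) (negbTE B24).
move/allP/(_ a5 H5); by rewrite B45 (negbTE B05) (negbTE B15) (negbTE B25) (negbTE B35).
Qed.
Lemma dual_add (x y : 'rV[rat]_10) : dual BK Mlat x -> dual BK Mlat y -> dual BK Mlat (x + y).
Proof. by move=> Hx Hy z Hz; rewrite bformDl; apply: is_intD; [apply: Hx | apply: Hy]. Qed.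

Lemma rv_xor_Zv v w : s8 v -> s8 w -> Zv (rv v + rv w - rv (xorv v w)).
Proof.
move=> Hv Hw; apply: Zv_cx => j Hj; rewrite cxB cxD !cx_rv //.
case: ifP => _; last by rewrite !addr0 ?subr0; exact: is_int0.
rewrite nth_xorv ?Hv ?Hw //.
by case: (nth false v _); case: (nth false w _) => /=; apply/isintP; vm_compute.
Qed.

Lemma parity_lemma p q : is_int ((p%:R - q%:R) / 2) -> odd p = odd q.
Proof.
move=> H; apply: bool_l1.
have Ep : (p%:R : rat) = (odd p)%:R + (p./2)%:R * 2.
  by rewrite -natrM -natrD muln2 odd_double_half.
have Eq : (q%:R : rat) = (odd q)%:R + (q./2)%:R * 2.
  by rewrite -natrM -natrD muln2 odd_double_half.
have := is_intB H (is_intB (is_int_nat p./2) (is_int_nat q./2)).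
move=> H'; apply: (is_int_eq H'); rewrite {1}Ep {1}Eq; by field.
Qed.

Lemma qb_mod2 a b : ~~ odd a -> ~~ odd b ->
  eq_mod2 (- a%:R / 2) (- b%:R / 2) -> odd a./2 = odd b./2.
Proof.
move=> Ha Hb H; apply: parity_lemma.
apply: (is_int_eq (is_intN H)).
rewrite -{1}(even_halfK Ha) -{1}(even_halfK Hb) -!muln2 !natrM; by field.
Qed.

Lemma sim_size v w : s8 w -> sim v w -> s8 v.
Proof. by move=> Hw; case/orP => /eqP ->; rewrite /s8 ?size_negv. Qed.

Lemma qb_bvec i : (i < 6)%N -> qb (bvec i).
Proof. by do 6 (case: i => [|i] //). Qed.

Section Surj.
Variable f : 'rV[rat]_10 -> 'rV[rat]_10.
Hypothesis Hf : disc_isometry BK Mlat f.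

Let Hd := proj1 Hf.
Let Hwd := proj1 (proj2 Hf).
Let Hadd := proj1 (proj2 (proj2 Hf)).
Let Hq := proj2 (proj2 (proj2 (proj2 (proj2 Hf)))).

Definition F v := bits (f (rv v)).

Lemma Fev v : ev v -> ev (F v).
Proof.
move=> Hv; apply/andP; split; first by rewrite size_bits.
exact: bits_even (Hd (rv_dual Hv)).
Qed.

Lemma F_fx v : ev v -> Mlat (f (rv v) - rv (F v)).
Proof. by move=> Hv; apply: Mlat_Zv; apply: bits_Zv; apply: Hd; apply: rv_dual. Qed.

Lemma Mlat_comb3 a b c d : Mlat (a - b) -> Mlat (b - c) -> Mlat (c - d) -> Mlat (a - d).
Proof.
move=> H1 H2 H3; have := Mlat_add (Mlat_add H1 H2) H3.
by rewrite !addrA subrK subrK.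
Qed.

Lemma Fsim v w : ev v -> ev w -> sim v w -> sim (F v) (F w).
Proof.
move=> Hv Hw Hs; apply/rv_sim; rewrite ?size_bits //.
have H1 : Mlat (rv (F v) - f (rv v)).
  by have := Mlat_opp (F_fx Hv); rewrite opprB.
apply: (Mlat_comb3 H1 _ (F_fx Hw)).
apply: Hwd; try exact: rv_dual.
by apply/rv_sim => //; exact: ev_size.
Qed.

Lemma Fxor v w : ev v -> ev w -> sim (F (xorv v w)) (xorv (F v) (F w)).
Proof.
move=> Hv Hw.
have Hs8v := ev_size Hv; have Hs8w := ev_size Hw.
have Hvw := fin_xor_ev Hs8v Hs8w Hv Hw.
have HFv := Fev Hv; have HFw := Fev Hw.
apply/rv_sim; rewrite ?size_bits ?size_xorv ?size_bits //.
have H1 : Mlat (rv (F (xorv v w)) - f (rv (xorv v w))).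
  by have := Mlat_opp (F_fx Hvw); rewrite opprB.
have H2 : Mlat (f (rv (xorv v w)) - f (rv v + rv w)).
  apply: Hwd; [exact: rv_dual | apply: dual_add; exact: rv_dual |].
  have := Mlat_opp (Mlat_Zv (rv_xor_Zv Hs8v Hs8w)); by rewrite opprB.
have H3 : Mlat (f (rv v + rv w) - (f (rv v) + f (rv w))).
  by apply: Hadd; exact: rv_dual.
have H4 : Mlat ((f (rv v) + f (rv w)) - (rv (F v) + rv (F w))).
  have := Mlat_add (F_fx Hv) (F_fx Hw).
  by rewrite opprD addrACA.
have H5 : Mlat ((rv (F v) + rv (F w)) - rv (xorv (F v) (F w))).
  by apply: Mlat_Zv; apply: rv_xor_Zv; apply: ev_size.
exact: (Mlat_comb3 (Mlat_comb3 H1 H2 H3) H4 H5).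
Qed.

Lemma Fqb v : ev v -> qb (F v) = qb v.
Proof.
move=> Hv; have HFv := Fev Hv.
have E1 := Hq (rv_dual Hv).
have E2 := q_wd' (rv_dual HFv) (F_fx Hv).
have := eqm2_trans (eqm2_sym E2) E1.
rewrite !bform_rv_rv ?(ev_size Hv) ?(ev_size HFv) // => E.
by apply: qb_mod2 E; [case/andP: HFv | case/andP: Hv].
Qed.

Lemma Fbb v w : ev v -> ev w -> bb (F v) (F w) = bb v w.
Proof.
move=> Hv Hw; have HFv := Fev Hv; have HFw := Fev Hw.
have Hvw := fin_xor_ev (ev_size Hv) (ev_size Hw) Hv Hw.
have E1 := fin_qb HFv HFw.
have E2 := fin_qb Hv Hw.
have E3 : qb (xorv (F v) (F w)) = qb (xorv v w).
  rewrite -(Fqb Hvw); apply: fin_simqb.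
  - exact: fin_xor_ev (ev_size HFv) (ev_size HFw) HFv HFw.
  - exact: Fev.
  exact: sim_sym (Fxor Hv Hw).
move: E1 E2 E3; rewrite (Fqb Hv) (Fqb Hw) => -> ->.
by case: (qb v); case: (qb w); case: (bb v w); case: (bb (F v) (F w)).
Qed.

Definition A i := normv (F (bvec i)).

Lemma A_od i : (i < 6)%N -> A i \in od.
Proof.
move=> Hi; have Hb := ev_bvec Hi; have HF := Fev Hb.
case: (fin_norm HF) => H1 _ H3 H4.
apply: od_mem => //; rewrite /A H3 (Fqb Hb).
exact: qb_bvec.
Qed.

Lemma A_bb i j : (i < 6)%N -> (j < 6)%N -> bb (A i) (A j) = bb (bvec i) (bvec j).
Proof.
move=> Hi Hj; have Hbi := ev_bvec Hi; have Hbj := ev_bvec Hj.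
by rewrite /A fin_normbb ?Fbb //; apply: Fev.
Qed.

Lemma exists_s : exists s : 'S_8, forall i, (i < 6)%N -> sim (F (bvec i)) (act s (bvec i)).
Proof.
have L : leaf [:: A 0; A 1; A 2; A 3; A 4; A 5].
  apply: srch_leaf; try (apply: A_od; done); rewrite A_bb //.
case: (leaf_perm L) => s Hs; exists s => i Hi.
have HF := Fev (ev_bvec Hi).
case: (fin_norm HF) => _ Hn _ _.
apply: (sim_trans (sim_sym Hn)).
have E : nth [::] [:: A 0; A 1; A 2; A 3; A 4; A 5] i = A i.
  by clear -Hi; move: Hi; do 6 (case: i => [|i] //).
by have := Hs i Hi; rewrite E.
Qed.
End Surj.

Lemma rv_gperm s v : s8 v -> rv v *m gperm s = rv (act s v).
Proof.
move=> Hv; apply/matrixP => i j; rewrite (ord1 i) mul_gperm !mkE ps_ge2.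
case: ifP => // Hj; rewrite ps_val ifF; last by lia.
rewrite addnK nth_act; last by have := ltn_ord j; lia.
by [].
Qed.

Lemma ev_recb c : ev (recb c).
Proof.
rewrite /recb.
have : forall i, i \in iota 0 6 -> (i < 6)%N by move=> i; rewrite mem_iota.
elim: (iota 0 6) => [|i l IH] Hl //=.
have Hl' : forall j, j \in l -> (j < 6)%N by move=> j Hj; apply: Hl; rewrite inE Hj orbT.
have Hr := IH Hl'; case: (nth false c i) => //.
have Hb := ev_bvec (Hl i (mem_head i l)).
exact: fin_xor_ev (ev_size Hb) (ev_size Hr) Hb Hr.
Qed.

Section Surj2.
Variable f : 'rV[rat]_10 -> 'rV[rat]_10.
Hypothesis Hf : disc_isometry BK Mlat f.

Lemma F_act s : (forall i, (i < 6)%N -> sim (F f (bvec i)) (act s (bvec i))) ->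
  forall v, ev v -> sim (F f v) (act s v).
Proof.
move=> Hs v Hv.
have Hd := fin_dec Hv; have Hr := ev_recb (dec v).
apply: (sim_trans (Fsim Hf Hv Hr Hd)).
apply: (sim_trans (fold_sim (Fev Hf) (@act_ev s) (Fxor Hf) _ Hs (dec v))).
  by move=> u w Hu Hw; rewrite (act_xor s (ev_size Hu) (ev_size Hw)); exact: sim_refl.
apply: act_sim; first exact: ev_size.
exact: sim_sym.
Qed.

Lemma surj_equiv : exists s, disc_equiv BK Mlat f (fun x => x *m gperm s).
Proof.
case: (exists_s Hf) => s Hs; exists s => x Hx.
have Hv : ev (bits x) by apply/andP; rewrite size_bits; split => //; exact: bits_even.
set v := bits x in Hv *.
have H1 : Mlat (f x - f (rv v)).
  apply: (proj1 (proj2 Hf)) => //; first exact: rv_dual.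
  exact: Mlat_Zv (bits_Zv Hx).
have H2 := F_fx Hf Hv.
have H3 : Mlat (rv (F f v) - rv (act s v)).
  apply/rv_sim; [by rewrite size_bits | exact: s8_act | exact: F_act].
have H4 : Mlat (rv (act s v) - x *m gperm s).
  rewrite -rv_gperm ?(ev_size Hv) // -mulmxBl; apply: Mlat_gperm.
  have := Mlat_opp (Mlat_Zv (bits_Zv Hx)); by rewrite opprB.
have := Mlat_add (Mlat_comb3 H1 H2 H3) H4; by rewrite addrA subrK.
Qed.
End Surj2.

Lemma dual_gperm s x : dual BK Mlat x -> dual BK Mlat (x *m gperm s).
Proof.
move=> Hx y Hy; rewrite -(gpermVK s y) bform_gperm; apply: Hx; exact: Mlat_gperm.
Qed.

Lemma disc_gperm s : disc_isometry BK Mlat (fun x => x *m gperm s).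
Proof.
split; first exact: dual_gperm.
split; first by move=> x y _ _ H; rewrite -mulmxBl; exact: Mlat_gperm.
split; first by move=> x y _ _; rewrite mulmxDl subrr; exact: Mlat0.
split.
  move=> x y _ _ H; have := Mlat_gperm (s^-1)%g H.
  by rewrite mulmxBl !gpermKV.
split.
  move=> y Hy; exists (y *m gperm (s^-1)%g); first exact: dual_gperm.
  by rewrite gpermVK subrr; exact: Mlat0.
by move=> x _; rewrite bform_gperm; exact: eqm2_refl.
Qed.

Definition chk4 (P : nat -> nat -> nat -> nat -> bool) :=
  all (fun a => all (fun b => all (fun c => all (fun d => P a b c d) (iota 0 8)) (iota 0 8))
   (iota 0 8)) (iota 0 8).
Lemma chk4P P : chk4 P -> forall a b c d, (a < 8)%N -> (b < 8)%N -> (c < 8)%N -> (d < 8)%N ->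
  P a b c d.
Proof.
move=> H a b c d Ha Hb Hc Hd.
have mi : forall x, (x < 8)%N -> x \in iota 0 8 by move=> x Hx; rewrite mem_iota.
move/allP: H => /(_ a (mi a Ha)) /allP /(_ b (mi b Hb)) /allP /(_ c (mi c Hc)) /allP.
by apply; exact: mi.
Qed.

Lemma fin_pair a b c d : (a < 8)%N -> (b < 8)%N -> (c < 8)%N -> (d < 8)%N -> a != b ->
  ev (pairv a b) /\ (sim (pairv a b) (pairv c d) -> (a == c) || (a == d)).
Proof.
move=> Ha Hb Hc Hd Hab.
have := chk4P (P := fun a b c d => (a != b) ==> ev (pairv a b) &&
   (sim (pairv a b) (pairv c d) ==> (a == c) || (a == d))) ltac:(by vm_compute) Ha Hb Hc Hd.
by rewrite Hab /= => /andP [H1 /implyP H2].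
Qed.

Lemma phi_inj (s t : 'S_8) :
  disc_equiv BK Mlat (fun x => x *m gperm s) (fun x => x *m gperm t) -> s = t.
Proof.
move=> H.
have key : forall a b : 'I_8, a != b -> (s a == t a) || (s a == t b).
  move=> a b Hab.
  have Hab' : (val a != val b)%N by [].
  case: (fin_pair (ltn_ord a) (ltn_ord b) (ltn_ord a) (ltn_ord b) Hab') => Hev _.
  have := H _ (rv_dual Hev); rewrite !rv_gperm ?(ev_size Hev) //.
  move/rv_sim => /(_ (s8_act _ _) (s8_act _ _)).
  rewrite !act_pair ?ltn_ord // !inord_val => Hsim.
  have Hsab : (val (s a) != val (s b))%N by rewrite (inj_eq val_inj) (inj_eq perm_inj).
  have [_ ] := fin_pair (ltn_ord (s a)) (ltn_ord (s b)) (ltn_ord (t a)) (ltn_ord (t b)) Hsab.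
  by move/(_ Hsim).
apply/permP => i.
pose j : 'I_8 := if nat_of_ord i == 0%N then inord 1 else inord 0.
pose k : 'I_8 := if nat_of_ord i == 7%N then inord 6 else inord 7.
have Hi8 := ltn_ord i.
have Hij : i != j.
  apply/eqP => /(congr1 (@nat_of_ord 8)); rewrite /j.
  case: ifP => /eqP E; rewrite inordK //; lia.
have Hik : i != k.
  apply/eqP => /(congr1 (@nat_of_ord 8)); rewrite /k.
  case: ifP => /eqP E; rewrite inordK //; lia.
have Hjk : j != k.
  apply/eqP => /(congr1 (@nat_of_ord 8)); rewrite /j /k.
  case: ifP => /eqP E; case: ifP => /eqP E'; rewrite !inordK //; lia.
move: (key i j Hij) (key i k Hik).
case/orP => /eqP // E1; case/orP => /eqP // E2.
by move: Hjk; rewrite -(inj_eq (@perm_inj _ t)) -E1 -E2 eqxx.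
Qed.

Lemma iso_M : iso_S8_Oq BK Mlat (fun s x => x *m gperm s).
Proof.
split; first exact: disc_gperm.
split.
  move=> s t x _ /=; rewrite gpermM mulmxA subrr; exact: Mlat0.
split; first exact: phi_inj.
move=> f Hf; exact: surj_equiv.
Qed.
Section Transfer.
Variables (a b : nat) (B1 : 'M[rat]_a) (L1 : 'rV[rat]_a -> Prop)
  (B2 : 'M[rat]_b) (L2 : 'rV[rat]_b -> Prop) (al : 'M[rat]_(a, b)) (be : 'M[rat]_(b, a)).
Hypothesis L1add : forall x y, L1 x -> L1 y -> L1 (x + y).
Hypothesis L1opp : forall x, L1 x -> L1 (- x).
Hypothesis L10 : L1 0.
Hypothesis L2add : forall x y, L2 x -> L2 y -> L2 (x + y).
Hypothesis L2opp : forall x, L2 x -> L2 (- x).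
Hypothesis L20 : L2 0.
Hypothesis T1 : forall x, dual B1 L1 x -> dual B2 L2 (x *m al).
Hypothesis T2 : forall y, dual B2 L2 y -> dual B1 L1 (y *m be).
Hypothesis T3 : forall x, L1 x -> L2 (x *m al).
Hypothesis T4 : forall y, L2 y -> L1 (y *m be).
Hypothesis T5 : forall y, dual B2 L2 y -> L2 (y *m be *m al - y).
Hypothesis T6 : forall x, dual B1 L1 x -> L1 (x *m al *m be - x).
Hypothesis T7 : forall x, dual B1 L1 x -> eq_mod2 (bform B2 (x *m al) (x *m al)) (bform B1 x x).
Hypothesis QW2 : forall y z, dual B2 L2 y -> L2 (z - y) -> eq_mod2 (bform B2 z z) (bform B2 y y).

Let D1 := dual B1 L1.
Let D2 := dual B2 L2.

Lemma L1sub x y : L1 x -> L1 y -> L1 (x - y). Proof. by move=> ? ?; apply: L1add => //; apply: L1opp. Qed.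
Lemma L2sub x y : L2 x -> L2 y -> L2 (x - y). Proof. by move=> ? ?; apply: L2add => //; apply: L2opp. Qed.
Lemma L1tr x y z : L1 (x - y) -> L1 (y - z) -> L1 (x - z).
Proof. by move=> H1 H2; have := L1add H1 H2; rewrite addrA subrK. Qed.
Lemma L2tr x y z : L2 (x - y) -> L2 (y - z) -> L2 (x - z).
Proof. by move=> H1 H2; have := L2add H1 H2; rewrite addrA subrK. Qed.
Lemma L1sym x y : L1 (x - y) -> L1 (y - x).
Proof. by move/L1opp; rewrite opprB. Qed.
Lemma L2sym x y : L2 (x - y) -> L2 (y - x).
Proof. by move/L2opp; rewrite opprB. Qed.
Lemma T3' x y : L1 (x - y) -> L2 (x *m al - y *m al).
Proof. by move/T3; rewrite mulmxBl. Qed.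
Lemma T4' x y : L2 (x - y) -> L1 (x *m be - y *m be).
Proof. by move/T4; rewrite mulmxBl. Qed.

Variable Phi : 'S_8 -> 'rV[rat]_b -> 'rV[rat]_b.
Hypothesis HPhi : iso_S8_Oq B2 L2 Phi.

Definition Psi s (x : 'rV[rat]_a) := Phi s (x *m al) *m be.

Lemma Psi_iso s : disc_isometry B1 L1 (Psi s).
Proof.
case: (proj1 HPhi s) => P1 [P2 [P3 [P4 [P5 P6]]]].
split; first by move=> x Hx; apply: T2; apply: P1; apply: T1.
split.
  move=> x y Hx Hy Hxy; apply: T4'; apply: P2; try exact: T1; exact: T3'.
split.
  move=> x y Hx Hy; rewrite /Psi -mulmxDl -mulmxBl; apply: T4.
  rewrite mulmxDl; apply: P3; exact: T1.
split.
  move=> x y Hx Hy H.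
  have Hxa := T1 Hx; have Hya := T1 Hy.
  have H1 := T3' H.
  have H2 : L2 (Phi s (x *m al) - Phi s (y *m al)).
    apply: (L2tr (L2sym (T5 (P1 _ Hxa)))); apply: (L2tr H1); exact: T5 (P1 _ Hya).
  have H3 := T4' (P4 _ _ Hxa Hya H2).
  apply: (L1tr (L1sym (T6 Hx))); apply: (L1tr H3); exact: T6 Hy.
split.
  move=> y Hy; case: (P5 _ (T1 Hy)) => x2 Hx2 H.
  exists (x2 *m be); first exact: T2.
  have H1 : L2 (Phi s (x2 *m be *m al) - Phi s x2).
    by apply: P2 => //; [apply: T1; exact: T2 | exact: T5].
  have H2 := T4' (L2tr H1 H).
  exact: (L1tr H2 (T6 Hy)).
move=> x Hx.
have Hxa := T1 Hx; have Hp := P1 _ Hxa.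
have E1 := T7 (T2 Hp).
have E2 := QW2 Hp (T5 Hp).
apply: (eqm2_trans (eqm2_sym E1)); apply: (eqm2_trans E2).
exact: (eqm2_trans (P6 _ Hxa) (T7 Hx)).
Qed.

Lemma Psi_hom s t : disc_equiv B1 L1 (Psi (s * t)%g) (Psi t \o Psi s).
Proof.
move=> x Hx /=; rewrite /Psi.
have Hxa := T1 Hx.
case: (proj1 HPhi s) => P1 _.
case: (proj1 HPhi t) => Q1 [Q2 _].
apply: T4'; apply: (L2tr (proj1 (proj2 HPhi) s t _ Hxa)) => /=.
apply: Q2; [exact: P1 | apply: T1; apply: T2; exact: P1 |].
exact: L2sym (T5 (P1 _ Hxa)).
Qed.

Lemma Psi_inj s t : disc_equiv B1 L1 (Psi s) (Psi t) -> s = t.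
Proof.
move=> H; apply: (proj1 (proj2 (proj2 HPhi))) => y Hy.
have Hyb := T2 Hy; have Hyba := T1 Hyb.
case: (proj1 HPhi s) => P1 [P2 _].
case: (proj1 HPhi t) => Q1 [Q2 _].
have H1 := T3' (H _ Hyb).
rewrite /Psi in H1.
have H2 : L2 (Phi s (y *m be *m al) - Phi t (y *m be *m al)).
  apply: (L2tr (L2sym (T5 (P1 _ Hyba)))); apply: (L2tr H1); exact: T5 (Q1 _ Hyba).
have Ha : L2 (Phi s y - Phi s (y *m be *m al)) by apply: P2 => //; exact: L2sym (T5 Hy).
have Hb : L2 (Phi t (y *m be *m al) - Phi t y) by apply: Q2 => //; exact: T5 Hy.
exact: (L2tr Ha (L2tr H2 Hb)).
Qed.

Lemma g_iso f : disc_isometry B1 L1 f -> disc_isometry B2 L2 (fun y => f (y *m be) *m al).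
Proof.
case=> P1 [P2 [P3 [P4 [P5 P6]]]].
split; first by move=> y Hy; apply: T1; apply: P1; apply: T2.
split; first by move=> y y' Hy Hy' H; apply: T3'; apply: P2; try exact: T2; exact: T4'.
split.
  move=> y y' Hy Hy'; rewrite -mulmxDl -mulmxBl; apply: T3.
  rewrite mulmxDl; apply: P3; exact: T2.
split.
  move=> y y' Hy Hy' H.
  have Hfy := P1 _ (T2 Hy); have Hfy' := P1 _ (T2 Hy').
  have H1 := T4' H.
  have H2 : L1 (f (y *m be) - f (y' *m be)).
    apply: (L1tr (L1sym (T6 Hfy))); apply: (L1tr H1); exact: T6 Hfy'.
  have H3 := T3' (P4 _ _ (T2 Hy) (T2 Hy') H2).
  apply: (L2tr (L2sym (T5 Hy))); apply: (L2tr H3); exact: T5 Hy'.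
split.
  move=> y Hy; case: (P5 _ (T2 Hy)) => x1 Hx1 H.
  exists (x1 *m al); first exact: T1.
  have H1 : L1 (f (x1 *m al *m be) - f x1).
    by apply: P2 => //; [apply: T2; exact: T1 | exact: T6].
  have H2 := T3' (L1tr H1 H).
  exact: (L2tr H2 (T5 Hy)).
move=> y Hy.
have Hyb := T2 Hy; have Hf := P1 _ Hyb.
apply: (eqm2_trans (T7 Hf)); apply: (eqm2_trans (P6 _ Hyb)).
apply: (eqm2_trans (eqm2_sym (T7 Hyb))).
exact: QW2 Hy (T5 Hy).
Qed.

Lemma Psi_surj f : disc_isometry B1 L1 f -> exists s, disc_equiv B1 L1 f (Psi s).
Proof.
move=> Hf; case: (proj2 (proj2 (proj2 HPhi)) _ (g_iso Hf)) => s Hs; exists s => x Hx.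
have Hxa := T1 Hx; have H := Hs _ Hxa; rewrite /= in H.
case: Hf => P1 [P2 _].
have H1 : L1 (f x - f (x *m al *m be)).
  by apply: P2 => //; [apply: T2; exact: T1 | exact: L1sym (T6 Hx)].
have H2 : L1 (f (x *m al *m be) - f (x *m al *m be) *m al *m be).
  exact: L1sym (T6 (P1 _ (T2 Hxa))).
exact: (L1tr H1 (L1tr H2 (T4' H))).
Qed.

Lemma transfer_iso : iso_S8_Oq B1 L1 Psi.
Proof.
split; first exact: Psi_iso.
split; first exact: Psi_hom.
split; first exact: Psi_inj.
exact: Psi_surj.
Qed.
End Transfer.
Definition Aal : 'M[rat]_(12, 10) := mk 12 10 (fun i j => if (2 <= i)%N then pf (i - 2)%N j else 0).
Definition Bbe : 'M[rat]_(10, 12) :=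
  mk 10 12 (fun i j => if (2 <= j)%N then (lget Wd i (j - 2)%N)%:~R else 0).
Definition BNm : 'M[rat]_12 := mk 12 12 (fun i j => if (i < 2)%N && (j < 2)%N then 0 else bn i j).
Definition U12 : 'M[rat]_12 := mk 12 12 (fun i j => if (i < 2)%N && (j < 2)%N then bn i j else 0).
Definition Dm : 'M[rat]_(12, 10) := mk 12 10 (fun i j => (i == j + 2)%N%:R).
Definition Em : 'M[rat]_(10, 12) := mk 10 12 (fun i j => (j == i + 2)%N%:R).
Definition Sm : 'M[rat]_12 := mk 12 12 (fun i j => (((i == 0) && (j == 1)) || ((i == 1) && (j == 0)))%N%:R).
Definition Qm : 'M[rat]_12 := mk 12 12 (fun i j => ((i == j) && (i < 2))%N%:R).

Lemma zero_mk m n : (0 : 'M[rat]_(m, n)) = mk m n (fun _ _ => 0).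
Proof. by apply/matrixP => i j; rewrite !mxE. Qed.

Lemma C1 : Aal *m BK *m Aal^T = BNm.
Proof. rewrite BKmk /Aal trmk !mulmk /BNm; apply: mk_eq; by vm_compute. Qed.
Lemma C2 : Bbe *m Aal = 1%:M.
Proof. rewrite id_mk /Aal /Bbe mulmk; apply: mk_eq; by vm_compute. Qed.
Lemma C3 : Aal *m Bbe = 1%:M - Qm.
Proof.
have -> : (1%:M - Qm : 'M[rat]_12) = mk 12 12 (fun i j => ((i == j) && (2 <= i))%N%:R).
  apply/matrixP => i j; rewrite !mxE /=.
  have -> : (i < 2)%N = ~~ (1 < i)%N by rewrite -leqNgt ltnS.
  have -> : (i == j) = (nat_of_ord i == nat_of_ord j) by [].
  case: (nat_of_ord i == nat_of_ord j); case: (1 < i)%N; by rewrite /= ?subr0 ?subrr.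
rewrite /Aal /Bbe mulmk; apply: mk_eq; by vm_compute.
Qed.
Lemma C0 : BN = BNm + U12.
Proof.
rewrite BNmk; apply/matrixP => i j; rewrite !mxE.
by case: ifP; rewrite ?add0r ?addr0.
Qed.
Lemma C5 : Bbe *m U12 = 0.
Proof. rewrite zero_mk /Bbe /U12 mulmk; apply: mk_eq; by vm_compute. Qed.
Lemma C6 : Pm *m Bbe = Em.
Proof. rewrite /Pm /Bbe /Em mulmk; apply: mk_eq; by vm_compute. Qed.
Lemma C7 : Aal = Dm *m Pm.
Proof. rewrite /Pm /Aal /Dm mulmk; apply: mk_eq; by vm_compute. Qed.
Lemma C8 : BN *m Sm = Qm.
Proof. rewrite BNmk /Sm /Qm mulmk; apply: mk_eq; by vm_compute. Qed.
Lemma C9 : U12 = Qm *m U12 *m Qm^T.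
Proof. rewrite /Qm /U12 trmk !mulmk; apply: mk_eq; by vm_compute. Qed.
Lemma U12_sym : U12^T = U12.
Proof. rewrite /U12 trmk; apply: mk_eq; by vm_compute. Qed.
Lemma Zm_Dm : Zm Dm. Proof. apply: Zm_mk; by vm_compute. Qed.
Lemma Zm_Em : Zm Em. Proof. apply: Zm_mk; by vm_compute. Qed.
Lemma Zm_Sm : Zm Sm. Proof. apply: Zm_mk; by vm_compute. Qed.

Lemma bform_addB n (B C : 'M[rat]_n) x y : bform (B + C) x y = bform B x y + bform C x y.
Proof. by rewrite /bform mulmxDr mulmxDl mxE. Qed.

Lemma NlatE x : Nlat x <-> Zv x.
Proof.
split; first by case/zspanE => c Hc ->; rewrite mulmx1.
by move=> H; apply/zspanE; exists x => //; rewrite mulmx1.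
Qed.

Lemma Mlat_Zv_P (c : 'rV[rat]_10) : Zv c -> Mlat (c *m Pm).
Proof.
move=> Hc; apply: (zspan_trans P_CPM Zm_Cm); apply/zspanE; by exists c.
Qed.

Lemma T3N x : Nlat x -> Mlat (x *m Aal).
Proof. by move/NlatE => Hx; rewrite C7 mulmxA; apply: Mlat_Zv_P; apply: Zv_mul Zm_Dm. Qed.

Lemma T4N y : Mlat y -> Nlat (y *m Bbe).
Proof.
move/Mlat_zspanP/zspanE => [w Hw ->]; apply/NlatE.
by rewrite -mulmxA C6; apply: Zv_mul Zm_Em.
Qed.

Lemma U12_vanish (y : 'rV[rat]_10) (z : 'rV[rat]_12) : bform U12 (y *m Bbe) z = 0.
Proof. by rewrite /bform -(mulmxA y Bbe U12) C5 mulmx0 mul0mx mxE. Qed.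

Lemma bform_BN_Bbe y z : bform BN (y *m Bbe) z = bform BK y (z *m Aal).
Proof.
rewrite C0 bform_addB U12_vanish addr0 -C1 -bform_mx.
by rewrite -mulmxA C2 mulmx1.
Qed.

Lemma BN_sym : BN^T = BN.
Proof. rewrite BNmk trmk; apply: mk_eq; by vm_compute. Qed.

Lemma T1N x : dual BN Nlat x -> dual BK Mlat (x *m Aal).
Proof.
move=> Hx y Hy.
have -> : bform BK (x *m Aal) y = bform BN x (y *m Bbe).
  by rewrite (bform_sym _ _ BN_sym) bform_BN_Bbe bform_sym ?BK_sym.
apply: Hx; exact: T4N.
Qed.

Lemma T2N y : dual BK Mlat y -> dual BN Nlat (y *m Bbe).
Proof. by move=> Hy z Hz; rewrite bform_BN_Bbe; apply: Hy; apply: T3N. Qed.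

Lemma T5N y : Mlat (y *m Bbe *m Aal - y).
Proof. by rewrite -mulmxA C2 mulmx1 subrr; exact: Mlat0. Qed.

Lemma dual_Zv n (B : 'M[rat]_n) L x :
  dual B L x -> (forall j, L (delta_mx 0 j)) -> Zv (x *m B).
Proof.
move=> Hx HL j; have := Hx _ (HL j).
by rewrite /bform trmx_delta -colE mxE.
Qed.

Lemma Nlat_delta j : Nlat (delta_mx 0 j).
Proof.
apply/NlatE => k; rewrite mxE.
by case: (_ && _); [exact: is_int1 | exact: is_int0].
Qed.

Lemma T6N x : dual BN Nlat x -> Nlat (x *m Aal *m Bbe - x).
Proof.
move=> Hx; apply/NlatE.
rewrite -mulmxA C3 mulmxBr mulmx1 addrC addKr -C8 mulmxA.
apply: Zv_opp; apply: Zv_mul Zm_Sm; apply: dual_Zv Hx Nlat_delta.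
Qed.

Definition cn (x : 'rV[rat]_12) (j : nat) : rat := x 0 (inord j).

Lemma bformU2 x y : bform U12 x y = cn x 0 * cn y 1 + cn x 1 * cn y 0.
Proof.
rewrite /bform /U12 {1}(tomkE x) {1}(tomkE y) trmk !mulmk mkE /=.
rewrite /lsum /cn /tomk; cbn [iota foldr].
have E0 : (inord 0 : 'I_1) = 0 by apply: ord_inj; rewrite /= inordK.
rewrite !E0 /bn /=.
set X := x 0. set Y := y 0.
ring.
Qed.
Lemma bformU x : bform U12 x x = 2 * (cn x 0 * cn x 1).
Proof. rewrite bformU2; ring. Qed.

Lemma T7N x : dual BN Nlat x -> eq_mod2 (bform BK (x *m Aal) (x *m Aal)) (bform BN x x).
Proof.
move=> Hx; rewrite bform_mx C1 C0 bform_addB C9 -bform_mx bformU.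
apply: eqm2_sym; apply: eqm2_add2.
have Hz : Zv (x *m Qm) by rewrite -C8 mulmxA; apply: Zv_mul Zm_Sm; apply: dual_Zv Hx Nlat_delta.
by apply: is_intM; apply: Hz.
Qed.

Lemma iso_N : Oq_isom_S8 BN Nlat.
Proof.
exists (Psi Aal Bbe (fun s x => x *m gperm s)).
apply: (@transfer_iso _ _ _ _ BK Mlat).
- exact: zspan_add.
- exact: zspan_opp.
- exact: Mlat_add.
- exact: Mlat_opp.
- exact: T1N.
- exact: T2N.
- exact: T3N.
- exact: T4N.
- by move=> y _; exact: T5N.
- exact: T6N.
- exact: T7N.
- by move=> y z Hy Hz; exact: q_wd'.
- exact: iso_M.
Qed.

Theorem lemma2p4 :
  (* the model M of H^2(X,Z)^+ is indeed isometric to U(2) + D4 + D4 *)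
  (exists P : 'M[rat]_10,
      (forall i, Mlat (row i P)) /\ (forall x, Mlat x -> zspan P x) /\
      P *m BK *m P^T = BM0) /\
  (* O(q_M) = S_8 and O(q_N) = S_8 *)
  Oq_isom_S8 BK Mlat /\ Oq_isom_S8 BN Nlat /\
  (* every permutation of F_1..F_8 fixing F, S_0 extends to an isometry of M *)
  (forall s : 'S_8,
      (forall x y, bform BK (x *m gperm s) (y *m gperm s) = bform BK x y) /\
      (forall x, Mlat x -> Mlat (x *m gperm s)) /\
      (forall y, Mlat y -> exists2 x, Mlat x & x *m gperm s = y)) /\
  (* these isometries map isomorphically onto O(q_M) under O(M) -> O(q_M) *)
  iso_S8_Oq BK Mlat (fun s x => x *m gperm s).
Proof.
split.
  exists Pm; split; first exact: Mlat_rowP.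
  split; first exact: Mlat_zspanP.
  exact: P_gram.
split; first by exists (fun s x => x *m gperm s); exact: iso_M.
split; first exact: iso_N.
split; last exact: iso_M.
move=> s; split; first exact: bform_gperm.
split; first exact: Mlat_gperm.
move=> y Hy; exists (y *m gperm (s^-1)%g); first exact: Mlat_gperm.
exact: gpermVK.
Qed.
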